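(* Let $X$ be a Banach space, $\Omega\in L(X)$ an isomorphism of $X$ onto itself, $\tau>0$, $\varphi\in C^{2}([-2\tau,0],X)$ and $f\in C^{0}([0,\infty),X)$. Then the unique classical solution of $$\ddot x(t)-\Omega^{2}x(t-2\tau)=f(t)\ (t\ge0),\qquad x(t)=\varphi(t)\ (t\in[-2\tau,0])$$ is, for $t\in[-2\tau,\infty)$, $$x(t)=x_1(t+\tau;\Omega)\varphi(-2\tau)+x_2(t+2\tau;\Omega)\dot\varphi(-2\tau)+\int_{-2\tau}^{0}x_2(t-s;\Omega)\ddot\varphi(s)\,ds+\begin{cases}0,& t\in[-2\tau,0),\\ \int_0^t x_2(t-s;\Omega)f(s)\,ds,& t\ge0.\end{cases}$$
   Context: For $A\in L(X)$, $\exp_\tau(t;A)=0$ for $t<-\tau$, $=\mathrm{id}_X$ for $-\tau\le t<0$, and $=\sum_{j=0}^{k}A^{j}\frac{(t-(j-1)\tau)^{j}}{j!}$ for $(k-1)\tau\le t<k\tau$, $k\in\mathbb N$. For $t\in\mathbb R$, $x_1(t;\Omega):=\tfrac12(\exp_\tau(t;\Omega)+\exp_\tau(t;-\Omega))$ and $x_2(t;\Omega):=\tfrac12\Omega^{-1}(\exp_\tau(t;\Omega)-\exp_\tau(t;-\Omega))$; in particular $x_2(t;\Omega)=0$ for $t<0$. A classical solution is a function $x\in C^{1}([-2\tau,\infty),X)\cap C^{2}([-2\tau,0],X)\cap C^{2}([0,\infty),X)$ (one-sided derivatives at endpoints) satisfying the equations pointwise. *)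

(* Defs.v *)
From Stdlib Require Import Reals Lra Lia ZArith.
Open Scope R_scope.

Record Banach := {
  car :> Type;
  vzero : car;
  vadd : car -> car -> car;
  vopp : car -> car;
  vscal : R -> car -> car;
  vnorm : car -> R;
  vadd_assoc : forall x y z, vadd x (vadd y z) = vadd (vadd x y) z;
  vadd_comm : forall x y, vadd x y = vadd y x;
  vadd_zero : forall x, vadd vzero x = x;
  vadd_opp : forall x, vadd (vopp x) x = vzero;
  vscal_assoc : forall a b x, vscal a (vscal b x) = vscal (a * b) x;
  vscal_one : forall x, vscal 1 x = x;
  vscal_distr_v : forall a x y, vscal a (vadd x y) = vadd (vscal a x) (vscal a y);
  vscal_distr_s : forall a b x, vscal (a + b) x = vadd (vscal a x) (vscal b x);
  vnorm_eq0 : forall x, vnorm x = 0 -> x = vzero;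
  vnorm_scal : forall a x, vnorm (vscal a x) = Rabs a * vnorm x;
  vnorm_triangle : forall x y, vnorm (vadd x y) <= vnorm x + vnorm y;
  vcomplete : forall u : nat -> car,
    (forall eps, 0 < eps -> exists N, forall m n, (N <= m)%nat -> (N <= n)%nat ->
        vnorm (vadd (u m) (vopp (u n))) < eps) ->
    exists l, forall eps, 0 < eps -> exists N, forall n, (N <= n)%nat ->
        vnorm (vadd (u n) (vopp l)) < eps
}.

Arguments vzero {_}.
Arguments vadd {_} _ _.
Arguments vopp {_} _.
Arguments vscal {_} _ _.
Arguments vnorm {_} _.

Definition vsub {X : Banach} (x y : X) : X := vadd x (vopp y).

Fixpoint vsum {X : Banach} (n : nat) (g : nat -> X) : X :=
  match n with
  | O => vzero
  | S m => vadd (vsum m g) (g m)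
  end.

Definition bounded_linear {X : Banach} (A : X -> X) : Prop :=
  (forall x y, A (vadd x y) = vadd (A x) (A y)) /\
  (forall a x, A (vscal a x) = vscal a (A x)) /\
  (exists M, forall x, vnorm (A x) <= M * vnorm x).

(* exp_tau(t;A) applied to v.  For t >= -tau the index k with
   (k-1) tau <= t < k tau is k = up (t/tau) (up y = floor y + 1). *)
Definition exp_tau {X : Banach} (tau : R) (A : X -> X) (t : R) (v : X) : X :=
  if Rlt_dec t (- tau) then vzero
  else vsum (S (Z.to_nat (up (t / tau))))
         (fun j => vscal ((t - (INR j - 1) * tau) ^ j / INR (fact j))
                         (Nat.iter j A v)).

Definition x1 {X : Banach} (tau : R) (Om : X -> X) (t : R) (v : X) : X :=
  vscal (1/2) (vadd (exp_tau tau Om t v) (exp_tau tau (fun y => vopp (Om y)) t v)).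

Definition x2 {X : Banach} (tau : R) (Om Ominv : X -> X) (t : R) (v : X) : X :=
  vscal (1/2) (Ominv (vsub (exp_tau tau Om t v)
                           (exp_tau tau (fun y => vopp (Om y)) t v))).

Definition continuous_on {X : Banach} (I : R -> Prop) (g : R -> X) : Prop :=
  forall t, I t -> forall eps, 0 < eps -> exists delta, 0 < delta /\
    forall s, I s -> Rabs (s - t) < delta -> vnorm (vsub (g s) (g t)) < eps.

Definition has_deriv_on {X : Banach} (I : R -> Prop) (g g' : R -> X) : Prop :=
  forall t, I t -> forall eps, 0 < eps -> exists delta, 0 < delta /\
    forall h, h <> 0 -> Rabs h < delta -> I (t + h) ->
      vnorm (vsub (vscal (/ h) (vsub (g (t + h)) (g t))) (g' t)) < eps.

Definition is_RInt {X : Banach} (g : R -> X) (a b : R) (Ival : X) : Prop :=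
  forall eps, 0 < eps -> exists delta, 0 < delta /\
    forall (n : nat) (p xi : nat -> R),
      p O = a -> p n = b ->
      (forall i, (i < n)%nat ->
         p i <= xi i <= p (S i) /\ p (S i) - p i < delta) ->
      vnorm (vsub (vsum n (fun i => vscal (p (S i) - p i) (g (xi i)))) Ival) < eps.

Definition Icc (a b : R) : R -> Prop := fun t => a <= t <= b.
Definition Ici (a : R) : R -> Prop := fun t => a <= t.

(* Classical solution of  x''(t) - Om^2 x(t - 2 tau) = f(t) (t >= 0),
   x = phi on [-2tau, 0]:  x in C^1([-2tau,oo)) /\ C^2([-2tau,0]) /\ C^2([0,oo)). *)
Definition classical_solution {X : Banach} (Om : X -> X) (tau : R)
    (phi f : R -> X) (x : R -> X) : Prop :=
  exists x' xL'' xR'' : R -> X,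
    has_deriv_on (Ici (-2 * tau)) x x' /\ continuous_on (Ici (-2 * tau)) x' /\
    has_deriv_on (Icc (-2 * tau) 0) x' xL'' /\ continuous_on (Icc (-2 * tau) 0) xL'' /\
    has_deriv_on (Ici 0) x' xR'' /\ continuous_on (Ici 0) xR'' /\
    (forall t, 0 <= t -> vsub (xR'' t) (Om (Om (x (t - 2 * tau)))) = f t) /\
    (forall t, -2 * tau <= t <= 0 -> x t = phi t).

(* Main.v *)
Require Import Defs.
From Stdlib Require Import Reals Lra Lia ZArith List Classical ClassicalEpsilon.
Open Scope R_scope.

Module M_A1.
Arguments vadd_assoc {_}. Arguments vadd_comm {_}. Arguments vadd_zero {_}.
Arguments vadd_opp {_}. Arguments vscal_assoc {_}. Arguments vscal_one {_}.
Arguments vscal_distr_v {_}. Arguments vscal_distr_s {_}. Arguments vnorm_eq0 {_}.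
Arguments vnorm_scal {_}. Arguments vnorm_triangle {_}. Arguments vcomplete {_}.

Section Alg.
Variable X : Banach.
Implicit Types x y z : X.

Lemma vadd_0r x : vadd x vzero = x.
Proof. rewrite vadd_comm; apply vadd_zero. Qed.
Lemma vadd_opp_r x : vadd x (vopp x) = vzero.
Proof. rewrite vadd_comm; apply vadd_opp. Qed.
Lemma vadd_cancel_l a x y : vadd a x = vadd a y -> x = y.
Proof.
  intros H. rewrite <- (vadd_zero x), <- (vadd_zero y), <- (vadd_opp a).
  rewrite <- !vadd_assoc, H. reflexivity.
Qed.
Lemma vscal_0l x : vscal 0 x = vzero.
Proof.
  apply (vadd_cancel_l (vscal 0 x)). rewrite vadd_0r, <- vscal_distr_s.
  now rewrite Rplus_0_r.
Qed.
Lemma vscal_0r a : vscal a (@vzero X) = vzero.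
Proof.
  apply (vadd_cancel_l (vscal a vzero)). rewrite vadd_0r, <- vscal_distr_v.
  now rewrite vadd_zero.
Qed.
Lemma vopp_scal x : vopp x = vscal (-1) x.
Proof.
  apply (vadd_cancel_l x). rewrite vadd_opp_r.
  rewrite <- (vscal_one x) at 1. rewrite <- vscal_distr_s.
  replace (1 + -1) with 0 by ring. now rewrite vscal_0l.
Qed.

Lemma vadd_swap (a b c d : X) : vadd (vadd a b) (vadd c d) = vadd (vadd a c) (vadd b d).
Proof.
  rewrite <- !vadd_assoc. f_equal. rewrite !vadd_assoc. f_equal. apply vadd_comm.
Qed.

Lemma vsum_add n f g : vsum n (fun i => vadd (f i) (g i)) = vadd (@vsum X n f) (vsum n g).
Proof.
  induction n; simpl. now rewrite vadd_zero.
  rewrite IHn. apply vadd_swap.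
Qed.
Lemma vsum_scal n a f : vsum n (fun i => vscal a (f i)) = vscal a (@vsum X n f).
Proof.
  induction n; simpl. now rewrite vscal_0r.
  now rewrite IHn, vscal_distr_v.
Qed.
Lemma vsum_ext n f g : (forall i, (i < n)%nat -> f i = g i) -> @vsum X n f = vsum n g.
Proof.
  induction n; simpl; intros H. auto. rewrite IHn by (intros; apply H; lia).
  now rewrite H by lia.
Qed.
Lemma vsum_zero n : @vsum X n (fun _ => vzero) = vzero.
Proof. induction n; simpl; auto. rewrite IHn; apply vadd_zero. Qed.

Inductive vexp := VAtom (n : nat) | VZero | VAdd (a b : vexp) | VOpp (a : vexp)
  | VScal (r : R) (a : vexp).
Fixpoint vinterp (env : list X) (e : vexp) : X :=
  match e with
  | VAtom n => nth n env vzero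
  | VZero => vzero
  | VAdd a b => vadd (vinterp env a) (vinterp env b)
  | VOpp a => vopp (vinterp env a)
  | VScal r a => vscal r (vinterp env a)
  end.
Fixpoint vcoef (e : vexp) (i : nat) : R :=
  match e with
  | VAtom n => if Nat.eqb n i then 1 else 0
  | VZero => 0
  | VAdd a b => vcoef a i + vcoef b i
  | VOpp a => - vcoef a i
  | VScal r a => r * vcoef a i
  end.
Lemma vsum_delta (env : list X) N n : (n < N)%nat ->
  vsum N (fun i => vscal (if Nat.eqb n i then 1 else 0) (nth i env vzero)) = nth n env vzero.
Proof.
  induction N; intros H. lia. simpl.
  destruct (Nat.eq_dec n N).
  - subst. rewrite Nat.eqb_refl, vscal_one.
    rewrite (vsum_ext _ _ (fun _ => vzero)). rewrite vsum_zero; apply vadd_zero.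
    intros i Hi. destruct (Nat.eqb_spec N i). lia. apply vscal_0l.
  - rewrite IHN by lia. destruct (Nat.eqb_spec n N). lia. rewrite vscal_0l; apply vadd_0r.
Qed.
Fixpoint vwf (N : nat) (e : vexp) : Prop :=
  match e with
  | VAtom n => (n < N)%nat
  | VZero => True
  | VAdd a b => vwf N a /\ vwf N b
  | VOpp a => vwf N a
  | VScal _ a => vwf N a
  end.
Lemma vinterp_nf (env : list X) N e : vwf N e ->
  vinterp env e = vsum N (fun i => vscal (vcoef e i) (nth i env vzero)).
Proof.
  induction e; simpl; intros W.
  - now rewrite vsum_delta.
  - rewrite (vsum_ext _ _ (fun _ => vzero)). now rewrite vsum_zero. intros; apply vscal_0l.
  - destruct W. rewrite IHe1, IHe2 by auto. rewrite <- vsum_add. apply vsum_ext.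
    intros; now rewrite vscal_distr_s.
  - rewrite IHe by auto. rewrite vopp_scal, <- vsum_scal. apply vsum_ext.
    intros; rewrite vscal_assoc; f_equal; ring.
  - rewrite IHe by auto. rewrite <- vsum_scal. apply vsum_ext.
    intros; rewrite vscal_assoc; f_equal.
Qed.
Fixpoint all_lt (N : nat) (P : nat -> Prop) : Prop :=
  match N with O => True | S n => all_lt n P /\ P n end.
Lemma all_lt_spec N P : all_lt N P -> forall i, (i < N)%nat -> P i.
Proof.
  induction N; simpl; intros H i Hi. lia.
  destruct H as [H1 H2]. destruct (Nat.eq_dec i N). now subst. apply IHN; auto; lia.
Qed.
Lemma vnorm_correct (env : list X) e1 e2 : vwf (length env) e1 -> vwf (length env) e2 ->
  all_lt (length env) (fun i => vcoef e1 i = vcoef e2 i) ->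
  vinterp env e1 = vinterp env e2.
Proof.
  intros W1 W2 H. rewrite !(vinterp_nf env (length env)) by auto.
  apply vsum_ext. intros i Hi. now rewrite (all_lt_spec _ _ H i Hi).
Qed.
End Alg.

Ltac vmem x l :=
  lazymatch l with
  | nil => constr:(false)
  | cons x _ => constr:(true)
  | cons _ ?l' => vmem x l'
  end.
Ltac vcollect e acc :=
  lazymatch e with
  | vadd ?a ?b => let acc := vcollect a acc in vcollect b acc
  | vsub ?a ?b => let acc := vcollect a acc in vcollect b acc
  | vopp ?a => vcollect a acc
  | vscal _ ?a => vcollect a acc
  | vzero => acc
  | _ => let b := vmem e acc in
         lazymatch b with true => acc | false => constr:(cons e acc) end
  end.
Ltac vindex x l :=
  lazymatch l with
  | cons x _ => constr:(O)
  | cons _ ?l' => let n := vindex x l' in constr:(S n)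
  end.
Ltac vreify e l :=
  lazymatch e with
  | vadd ?a ?b => let ra := vreify a l in let rb := vreify b l in constr:(VAdd ra rb)
  | vsub ?a ?b => let ra := vreify a l in let rb := vreify b l in constr:(VAdd ra (VOpp rb))
  | vopp ?a => let ra := vreify a l in constr:(VOpp ra)
  | vscal ?r ?a => let ra := vreify a l in constr:(VScal r ra)
  | vzero => constr:(VZero)
  | _ => let n := vindex e l in constr:(VAtom n)
  end.
Ltac vring :=
  lazymatch goal with
  | |- @eq (car ?X) ?a ?b =>
    let l0 := constr:(@nil (car X)) in
    let l1 := vcollect a l0 in
    let l := vcollect b l1 in

    let ra := vreify a l in
    let rb := vreify b l in
    change (vinterp X l ra = vinterp X l rb);
    apply vnorm_correct; simpl; repeat split; try lia; try ring; try field
  end.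


End M_A1.
Import M_A1.

Module M_A2.

Fixpoint rsum (n : nat) (g : nat -> R) : R :=
  match n with O => 0 | S m => rsum m g + g m end.

Lemma rsum_ext n f g : (forall i, (i < n)%nat -> f i = g i) -> rsum n f = rsum n g.
Proof. induction n; simpl; intros H; auto. rewrite IHn, H; auto; lia. Qed.
Lemma rsum_le n f g : (forall i, (i < n)%nat -> f i <= g i) -> rsum n f <= rsum n g.
Proof. induction n; simpl; intros H. lra. pose proof (H n ltac:(lia)). pose proof (IHn ltac:(intros; apply H; lia)). lra. Qed.
Lemma rsum_nonneg n f : (forall i, (i < n)%nat -> 0 <= f i) -> 0 <= rsum n f.
Proof. intros H. replace 0 with (rsum n (fun _ => 0)). apply rsum_le; auto. induction n; simpl; auto; rewrite IHn; [ring|]; intros; apply H; lia. Qed.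
Lemma rsum_scal n a f : rsum n (fun i => a * f i) = a * rsum n f.
Proof. induction n; simpl. ring. rewrite IHn; ring. Qed.
Lemma rsum_add n f g : rsum n (fun i => f i + g i) = rsum n f + rsum n g.
Proof. induction n; simpl. ring. rewrite IHn; ring. Qed.
Lemma rsum_tel n (p : nat -> R) : rsum n (fun i => p (S i) - p i) = p n - p O.
Proof. induction n; simpl. ring. rewrite IHn; ring. Qed.
Lemma rsum_swap n m (f : nat -> nat -> R) :
  rsum n (fun i => rsum m (fun j => f i j)) = rsum m (fun j => rsum n (fun i => f i j)).
Proof.
  induction n; simpl. induction m; simpl; auto; rewrite <- IHm; ring.
  rewrite IHn. rewrite <- rsum_add. apply rsum_ext; auto.
Qed.

Section Norm.
Variable X : Banach.
Implicit Types x y z : X.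

Lemma vnorm_0 : vnorm (@vzero X) = 0.
Proof. rewrite <- (vscal_0l X vzero), vnorm_scal, Rabs_R0; ring. Qed.
Lemma vnorm_opp x : vnorm (vopp x) = vnorm x.
Proof. rewrite vopp_scal, vnorm_scal. replace (Rabs (-1)) with 1 by (unfold Rabs; destruct Rcase_abs; lra). ring. Qed.
Lemma vnorm_nonneg x : 0 <= vnorm x.
Proof.
  pose proof (vnorm_triangle x (vopp x)). rewrite vadd_opp_r, vnorm_0, vnorm_opp in H. lra.
Qed.
Lemma vsub_sym x y : vnorm (vsub x y) = vnorm (vsub y x).
Proof. replace (vsub x y) with (vopp (vsub y x)) by (unfold vsub; vring). apply vnorm_opp. Qed.
Lemma vnorm_sub_tri x y z : vnorm (vsub x z) <= vnorm (vsub x y) + vnorm (vsub y z).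
Proof. replace (vsub x z) with (vadd (vsub x y) (vsub y z)) by (unfold vsub; vring). apply vnorm_triangle. Qed.
Lemma vsub_0 x y : vsub x y = vzero -> x = y.
Proof. intros H. replace x with (vadd (vsub x y) y) by (unfold vsub; vring). rewrite H; vring. Qed.
Lemma vnorm_small_eq x y : (forall e, 0 < e -> vnorm (vsub x y) < e) -> x = y.
Proof.
  intros H. apply vsub_0, vnorm_eq0. pose proof (vnorm_nonneg (vsub x y)).
  destruct (Rle_lt_or_eq_dec _ _ H0); auto. specialize (H _ r). lra.
Qed.
Lemma vnorm_add_le x y a b : vnorm x <= a -> vnorm y <= b -> vnorm (vadd x y) <= a + b.
Proof. intros; pose proof (vnorm_triangle x y); lra. Qed.
Lemma vnorm_sub_le x y : vnorm (vsub x y) <= vnorm x + vnorm y.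
Proof. unfold vsub. rewrite <- (vnorm_opp y). apply vnorm_triangle. Qed.
Lemma vnorm_scal_le a x : vnorm (vscal a x) = Rabs a * vnorm x.
Proof. apply vnorm_scal. Qed.

Lemma vsum_split n m f : @vsum X (n + m) f = vadd (vsum n f) (vsum m (fun i => f (n + i)%nat)).
Proof.
  induction m; simpl. rewrite Nat.add_0_r; vring.
  rewrite Nat.add_succ_r; simpl. rewrite IHm; vring.
Qed.
Lemma vsum_sub n f g : vsum n (fun i => vsub (f i) (g i)) = vsub (@vsum X n f) (vsum n g).
Proof. induction n; simpl. unfold vsub; vring. rewrite IHn. unfold vsub; vring. Qed.
Lemma vsum_tel n (G : nat -> X) : vsum n (fun i => vsub (G (S i)) (G i)) = vsub (G n) (G O).
Proof. induction n; simpl. unfold vsub; vring. rewrite IHn; unfold vsub; vring. Qed.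
Lemma vsum_norm n f : vnorm (@vsum X n f) <= rsum n (fun i => vnorm (f i)).
Proof. induction n; simpl. rewrite vnorm_0; lra. eapply Rle_trans. apply vnorm_triangle. lra. Qed.
Lemma vsum_swap n m (f : nat -> nat -> X) :
  vsum n (fun i => vsum m (fun j => f i j)) = vsum m (fun j => vsum n (fun i => f i j)).
Proof.
  induction n; simpl. rewrite vsum_zero; auto.
  rewrite IHn. rewrite <- vsum_add. apply vsum_ext; auto.
Qed.
Lemma vsum_rsum_scal n (c : nat -> R) (v : X) : vsum n (fun i => vscal (c i) v) = vscal (rsum n c) v.
Proof. induction n; simpl. rewrite vscal_0l; auto. rewrite IHn, vscal_distr_s; auto. Qed.
Lemma vsum_shift n f : @vsum X (S n) f = vadd (f O) (vsum n (fun i => f (S i))).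
Proof. induction n. simpl; vring. change (vsum (S (S n)) f) with (vadd (vsum (S n) f) (f (S n))). rewrite IHn. simpl; vring. Qed.
Lemma vsum_pairs n f : @vsum X (2 * n) f = vsum n (fun m => vadd (f (2 * m)%nat) (f (S (2 * m)))).
Proof.
  induction n. simpl; auto.
  replace (2 * S n)%nat with (S (S (2 * n))) by lia. change (vsum (S (S (2*n))) f) with (vadd (vadd (vsum (2*n) f) (f (2*n)%nat)) (f (S (2*n)))). rewrite IHn. simpl. vring.
Qed.

Lemma bl_zero (A : X -> X) : bounded_linear A -> A vzero = vzero.
Proof. intros [H1 [H2 _]]. rewrite <- (vscal_0l X vzero) at 1. rewrite H2, vscal_0l; auto. Qed.
Lemma bl_opp (A : X -> X) x : bounded_linear A -> A (vopp x) = vopp (A x).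
Proof. intros [H1 [H2 _]]. rewrite !vopp_scal, H2; auto. Qed.
Lemma bl_add (A : X -> X) x y : bounded_linear A -> A (vadd x y) = vadd (A x) (A y).
Proof. intros [H1 _]. auto. Qed.
Lemma bl_sub (A : X -> X) x y : bounded_linear A -> A (vsub x y) = vsub (A x) (A y).
Proof. intros H. unfold vsub. rewrite bl_add, bl_opp; auto. Qed.
Lemma bl_scal (A : X -> X) a x : bounded_linear A -> A (vscal a x) = vscal a (A x).
Proof. intros [_ [H2 _]]. auto. Qed.
Lemma bl_vsum (A : X -> X) n f : bounded_linear A -> A (vsum n f) = vsum n (fun i => A (f i)).
Proof. intros H; induction n; simpl. apply bl_zero; auto. rewrite bl_add, IHn; auto. Qed.
Lemma bl_bound (A : X -> X) : bounded_linear A -> exists M, 0 < M /\ forall x, vnorm (A x) <= M * vnorm x.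
Proof.
  intros [_ [_ [M HM]]]. exists (Rmax M 1). split. pose proof (Rmax_r M 1); lra.
  intros x. eapply Rle_trans. apply HM. apply Rmult_le_compat_r. apply vnorm_nonneg. apply Rmax_l.
Qed.
Lemma bl_comp (A B : X -> X) : bounded_linear A -> bounded_linear B -> bounded_linear (fun x => A (B x)).
Proof.
  intros HA HB. split; [|split].
  - intros; rewrite !bl_add; auto.
  - intros; rewrite !bl_scal; auto.
  - destruct (bl_bound A HA) as [M [HM HA']]. destruct (bl_bound B HB) as [N [HN HB']].
    exists (M * N). intros x. eapply Rle_trans. apply HA'. rewrite Rmult_assoc. apply Rmult_le_compat_l; lra || auto.
Qed.
Lemma bl_id : bounded_linear (fun x : X => x).
Proof. split; [|split]; auto. exists 1; intros; lra. Qed.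
Lemma bl_iter (A : X -> X) n : bounded_linear A -> bounded_linear (Nat.iter n A).
Proof. intros H; induction n; simpl. apply bl_id. apply (bl_comp A (Nat.iter n A)); auto. Qed.
End Norm.

End M_A2.
Import M_A2.

Module M_B.

Definition rdat (I : R -> Prop) (c : R -> R) (c' : R) (t : R) : Prop :=
  forall eps, 0 < eps -> exists d, 0 < d /\ forall h, Rabs h < d -> I (t + h) ->
    Rabs (c (t + h) - c t - h * c') <= eps * Rabs h.

Lemma rdat_of_lim I c c' t : derivable_pt_lim c t c' -> rdat I c c' t.
Proof.
  intros H eps He. destruct (H eps He) as [d Hd]. exists d; split. apply cond_pos.
  intros h Hh _. destruct (Req_dec h 0) as [->|Hn].
  rewrite Rplus_0_r, Rabs_R0. replace (c t - c t - 0 * c') with 0 by ring. rewrite Rabs_R0; lra.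
  specialize (Hd h Hn Hh).
  replace (c (t + h) - c t - h * c') with (h * ((c (t + h) - c t) / h - c')) by (field; auto).
  rewrite Rabs_mult. rewrite Rmult_comm. apply Rmult_le_compat_r. apply Rabs_pos. lra.
Qed.

Lemma rdat_cont I c c' t : rdat I c c' t -> forall eps, 0 < eps -> exists d, 0 < d /\
  forall h, Rabs h < d -> I (t + h) -> Rabs (c (t + h) - c t) < eps.
Proof.
  intros H eps He. destruct (H 1 Rlt_0_1) as [d [Hd Hc]].
  exists (Rmin d (eps / (Rabs c' + 2))). split. apply Rmin_pos; auto. apply Rdiv_lt_0_compat; auto. pose proof (Rabs_pos c'); lra.
  intros h Hh Ih. assert (Hh1 : Rabs h < d) by (eapply Rlt_le_trans; [apply Hh| apply Rmin_l]).
  assert (Hh2 : Rabs h < eps / (Rabs c' + 2)) by (eapply Rlt_le_trans; [apply Hh| apply Rmin_r]).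
  specialize (Hc h Hh1 Ih).
  replace (c (t + h) - c t) with ((c (t + h) - c t - h * c') + h * c') by ring.
  eapply Rle_lt_trans. apply Rabs_triang. rewrite Rabs_mult.
  assert (Rabs h * (Rabs c' + 2) < eps).
  { apply (Rmult_lt_compat_r (Rabs c' + 2)) in Hh2. 2: pose proof (Rabs_pos c'); lra.
    unfold Rdiv in Hh2. rewrite Rmult_assoc, Rinv_l in Hh2. lra. pose proof (Rabs_pos c'); lra. }
  pose proof (Rabs_pos h). pose proof (Rabs_pos c'). nra.
Qed.

Section Calc.
Variable X : Banach.

Definition dat (I : R -> Prop) (g g' : R -> X) (t : R) : Prop :=
  forall eps, 0 < eps -> exists d, 0 < d /\ forall h, Rabs h < d -> I (t + h) ->
    vnorm (vsub (vsub (g (t + h)) (g t)) (vscal h (g' t))) <= eps * Rabs h.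
Definition cat (I : R -> Prop) (g : R -> X) (t : R) : Prop :=
  forall eps, 0 < eps -> exists d, 0 < d /\
    forall s, I s -> Rabs (s - t) < d -> vnorm (vsub (g s) (g t)) < eps.

Lemma cont_iff I g : continuous_on I g <-> forall t, I t -> cat I g t.
Proof. unfold continuous_on, cat; split; auto. Qed.

Lemma deriv_iff I g g' : has_deriv_on I g g' <-> forall t, I t -> dat I g g' t.
Proof.
  unfold has_deriv_on, dat; split; intros H t It eps He.
  - destruct (H t It (eps / 2)) as [d [Hd Hh]]. lra. exists d; split; auto.
    intros h Hh1 Ih. destruct (Req_dec h 0) as [->|Hn].
    + rewrite Rplus_0_r, vscal_0l. replace (vsub (vsub (g t) (g t)) vzero) with (@vzero X) by (unfold vsub; vring).
      rewrite vnorm_0, Rabs_R0; lra.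
    + specialize (Hh h Hn Hh1 Ih).
      replace (vsub (vsub (g (t + h)) (g t)) (vscal h (g' t))) with
        (vscal h (vsub (vscal (/ h) (vsub (g (t + h)) (g t))) (g' t))).
      rewrite vnorm_scal. rewrite Rmult_comm. apply Rmult_le_compat_r. apply Rabs_pos. lra.
      unfold vsub; vring; auto.
  - destruct (H t It (eps / 2)) as [d [Hd Hh]]. lra. exists d; split; auto.
    intros h Hn Hh1 Ih. specialize (Hh h Hh1 Ih).
    replace (vsub (vscal (/ h) (vsub (g (t + h)) (g t))) (g' t)) with
      (vscal (/ h) (vsub (vsub (g (t + h)) (g t)) (vscal h (g' t)))).
    rewrite vnorm_scal. rewrite Rabs_inv.
    apply Rle_lt_trans with (/ Rabs h * (eps / 2 * Rabs h)).
    apply Rmult_le_compat_l; auto. left; apply Rinv_0_lt_compat, Rabs_pos_lt; auto.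
    field_simplify. lra. apply Rabs_no_R0; auto.
    unfold vsub; vring; auto.
Qed.

Lemma dat_cont I g g' t : I t -> dat I g g' t -> cat I g t.
Proof.
  intros It H eps He. destruct (H 1 Rlt_0_1) as [d [Hd Hh]].
  set (K := vnorm (g' t) + 1). assert (HK : 0 < K) by (unfold K; pose proof (vnorm_nonneg _ (g' t)); lra).
  exists (Rmin d (eps / (K + 1))). split. apply Rmin_pos; auto. apply Rdiv_lt_0_compat; lra.
  intros s Is Hs. assert (Hs1 : Rabs (s - t) < d) by (eapply Rlt_le_trans; [apply Hs| apply Rmin_l]).
  assert (Hs2 : Rabs (s - t) < eps / (K + 1)) by (eapply Rlt_le_trans; [apply Hs| apply Rmin_r]).
  replace s with (t + (s - t)) in Is |- * by ring. specialize (Hh _ Hs1 Is).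
  replace (vsub (g (t + (s - t))) (g t)) with (vadd (vsub (vsub (g (t + (s - t))) (g t)) (vscal (s - t) (g' t))) (vscal (s - t) (g' t))) by (unfold vsub; vring).
  eapply Rle_lt_trans. apply vnorm_triangle. rewrite vnorm_scal.
  assert (Rabs (s - t) * (K + 1) < eps).
  { apply (Rmult_lt_compat_r (K + 1)) in Hs2. 2: lra.
    unfold Rdiv in Hs2. rewrite Rmult_assoc, Rinv_l in Hs2; lra. }
  unfold K in *. pose proof (Rabs_pos (s - t)). pose proof (vnorm_nonneg _ (g' t)). nra.
Qed.

Lemma dat_local I J g g' t : dat J g g' t -> (exists r, 0 < r /\ forall s, I s -> Rabs (s - t) < r -> J s) -> dat I g g' t.
Proof.
  intros H [r [Hr HIJ]] eps He. destruct (H eps He) as [d [Hd Hh]].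
  exists (Rmin d r); split. apply Rmin_pos; auto.
  intros h Hh1 Ih. apply Hh. eapply Rlt_le_trans; [apply Hh1| apply Rmin_l].
  apply HIJ; auto. replace (t + h - t) with h by ring. eapply Rlt_le_trans; [apply Hh1| apply Rmin_r].
Qed.
Lemma cat_local I J g t : cat J g t -> (exists r, 0 < r /\ forall s, I s -> Rabs (s - t) < r -> J s) -> cat I g t.
Proof.
  intros H [r [Hr HIJ]] eps He. destruct (H eps He) as [d [Hd Hh]].
  exists (Rmin d r); split. apply Rmin_pos; auto.
  intros s Is Hs. apply Hh. apply HIJ; auto. eapply Rlt_le_trans; [apply Hs| apply Rmin_r].
  eapply Rlt_le_trans; [apply Hs| apply Rmin_l].
Qed.
Lemma dat_union A B g g' t : dat A g g' t -> dat B g g' t -> dat (fun s => A s \/ B s) g g' t.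
Proof.
  intros H1 H2 eps He. destruct (H1 eps He) as [d1 [Hd1 K1]]. destruct (H2 eps He) as [d2 [Hd2 K2]].
  exists (Rmin d1 d2); split. apply Rmin_pos; auto.
  intros h Hh [Ih|Ih]. apply K1; auto. eapply Rlt_le_trans; [apply Hh| apply Rmin_l].
  apply K2; auto. eapply Rlt_le_trans; [apply Hh| apply Rmin_r].
Qed.
Lemma cat_union A B g t : cat A g t -> cat B g t -> cat (fun s => A s \/ B s) g t.
Proof.
  intros H1 H2 eps He. destruct (H1 eps He) as [d1 [Hd1 K1]]. destruct (H2 eps He) as [d2 [Hd2 K2]].
  exists (Rmin d1 d2); split. apply Rmin_pos; auto.
  intros s [Is|Is] Hs. apply K1; auto. eapply Rlt_le_trans; [apply Hs| apply Rmin_l].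
  apply K2; auto. eapply Rlt_le_trans; [apply Hs| apply Rmin_r].
Qed.
Lemma dat_ext I g g2 g' g2' t : I t -> (exists r, 0 < r /\ forall s, I s -> Rabs (s - t) < r -> g s = g2 s) ->
  g' t = g2' t -> dat I g g' t -> dat I g2 g2' t.
Proof.
  intros It [r [Hr E]] E' H eps He. destruct (H eps He) as [d [Hd Hh]].
  exists (Rmin d r); split. apply Rmin_pos; auto.
  intros h Hh1 Ih. rewrite <- E', <- !E; auto.
  apply Hh; auto. eapply Rlt_le_trans; [apply Hh1| apply Rmin_l].
  replace (t - t) with 0 by ring; rewrite Rabs_R0; auto.
  replace (t + h - t) with h by ring. eapply Rlt_le_trans; [apply Hh1| apply Rmin_r].
Qed.
Lemma cat_ext I g g2 t : I t -> (exists r, 0 < r /\ forall s, I s -> Rabs (s - t) < r -> g s = g2 s) ->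
  cat I g t -> cat I g2 t.
Proof.
  intros It [r [Hr E]] H eps He. destruct (H eps He) as [d [Hd Hh]].
  exists (Rmin d r); split. apply Rmin_pos; auto.
  intros s Is Hs. rewrite <- !E; auto. apply Hh; auto. eapply Rlt_le_trans; [apply Hs| apply Rmin_l].
  replace (t - t) with 0 by ring; rewrite Rabs_R0; auto.
  eapply Rlt_le_trans; [apply Hs| apply Rmin_r].
Qed.

Lemma dat_add I g k g' k' t : dat I g g' t -> dat I k k' t ->
  dat I (fun s => vadd (g s) (k s)) (fun s => vadd (g' s) (k' s)) t.
Proof.
  intros H1 H2 eps He. destruct (H1 (eps/2)) as [d1 [Hd1 K1]]. lra. destruct (H2 (eps/2)) as [d2 [Hd2 K2]]. lra.
  exists (Rmin d1 d2); split. apply Rmin_pos; auto.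
  intros h Hh Ih. specialize (K1 h ltac:(eapply Rlt_le_trans; [apply Hh| apply Rmin_l]) Ih).
  specialize (K2 h ltac:(eapply Rlt_le_trans; [apply Hh| apply Rmin_r]) Ih).
  replace (vsub (vsub (vadd (g (t + h)) (k (t + h))) (vadd (g t) (k t))) (vscal h (vadd (g' t) (k' t))))
   with (vadd (vsub (vsub (g (t + h)) (g t)) (vscal h (g' t))) (vsub (vsub (k (t + h)) (k t)) (vscal h (k' t)))).
  eapply Rle_trans. apply vnorm_triangle. lra.
  rewrite vscal_distr_v. unfold vsub; vring.
Qed.
Lemma dat_scal I g g' t a : dat I g g' t -> dat I (fun s => vscal a (g s)) (fun s => vscal a (g' s)) t.
Proof.
  intros H eps He. destruct (H (eps / (Rabs a + 1))) as [d [Hd K]].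
  apply Rdiv_lt_0_compat; auto. pose proof (Rabs_pos a); lra.
  exists d; split; auto. intros h Hh Ih. specialize (K h Hh Ih).
  replace (vsub (vsub (vscal a (g (t + h))) (vscal a (g t))) (vscal h (vscal a (g' t))))
    with (vscal a (vsub (vsub (g (t + h)) (g t)) (vscal h (g' t)))).
  rewrite vnorm_scal. apply Rle_trans with (Rabs a * (eps / (Rabs a + 1) * Rabs h)).
  apply Rmult_le_compat_l; auto. apply Rabs_pos.
  assert (Rabs a / (Rabs a + 1) <= 1). { apply Rmult_le_reg_r with (Rabs a + 1). pose proof (Rabs_pos a); lra.
    unfold Rdiv. rewrite Rmult_assoc, Rinv_l. lra. pose proof (Rabs_pos a); lra. }
  replace (Rabs a * (eps / (Rabs a + 1) * Rabs h)) with ((Rabs a / (Rabs a + 1)) * (eps * Rabs h)) by (field; pose proof (Rabs_pos a); lra).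
  pose proof (Rabs_pos h). rewrite <- (Rmult_1_l (eps * Rabs h)) at 2. apply Rmult_le_compat_r; nra.
  unfold vsub; vring.
Qed.
Lemma dat_ext_all I g g2 g' g2' t : (forall s, g s = g2 s) -> (forall s, g' s = g2' s) ->
  dat I g g' t -> dat I g2 g2' t.
Proof.
  intros E E' H eps He. destruct (H eps He) as [d [Hd K]]. exists d; split; auto.
  intros h Hh Ih. rewrite <- !E, <- E'. auto.
Qed.
Lemma cat_ext_all I g g2 t : (forall s, g s = g2 s) -> cat I g t -> cat I g2 t.
Proof.
  intros E H eps He. destruct (H eps He) as [d [Hd K]]. exists d; split; auto.
  intros s Is Hs. rewrite <- !E. auto.
Qed.
Lemma dat_opp I g g' t : dat I g g' t -> dat I (fun s => vopp (g s)) (fun s => vopp (g' s)) t.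
Proof.
  intros H. apply dat_ext_all with (g := fun s => vscal (-1) (g s)) (g' := fun s => vscal (-1) (g' s)).
  intros; now rewrite vopp_scal. intros; now rewrite vopp_scal. now apply dat_scal.
Qed.
Lemma dat_sub I g k g' k' t : dat I g g' t -> dat I k k' t ->
  dat I (fun s => vsub (g s) (k s)) (fun s => vsub (g' s) (k' s)) t.
Proof. intros; unfold vsub. apply dat_add; auto. apply dat_opp; auto. Qed.
Lemma dat_const I (v : X) t : dat I (fun _ => v) (fun _ => vzero) t.
Proof.
  intros eps He. exists 1; split. lra. intros h _ _.
  replace (vsub (vsub v v) (vscal h vzero)) with (@vzero X) by (rewrite vscal_0r; unfold vsub; vring).
  rewrite vnorm_0. pose proof (Rabs_pos h); nra.
Qed.
Lemma dat_vsum I n (g g' : nat -> R -> X) t : (forall i, (i < n)%nat -> dat I (g i) (g' i) t) ->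
  dat I (fun s => vsum n (fun i => g i s)) (fun s => vsum n (fun i => g' i s)) t.
Proof.
  induction n; intros H; simpl. apply dat_const.
  apply (dat_add I (fun s => vsum n (fun i => g i s)) (g n)); auto.
Qed.
Lemma dat_op I (A : X -> X) g g' t : bounded_linear A -> dat I g g' t ->
  dat I (fun s => A (g s)) (fun s => A (g' s)) t.
Proof.
  intros HA H eps He. destruct (bl_bound _ A HA) as [M [HM HAM]].
  destruct (H (eps / M)) as [d [Hd K]]. apply Rdiv_lt_0_compat; auto.
  exists d; split; auto. intros h Hh Ih. specialize (K h Hh Ih).
  rewrite <- bl_scal, <- !bl_sub; auto. eapply Rle_trans. apply HAM.
  apply Rle_trans with (M * (eps / M * Rabs h)). apply Rmult_le_compat_l; lra.
  right; field; lra.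
Qed.
Lemma dat_prod I (c : R -> R) c' g g' t : rdat I c c' t -> dat I g g' t ->
  dat I (fun s => vscal (c s) (g s)) (fun s => vadd (vscal c' (g s)) (vscal (c s) (g' s))) t.
Proof.
  intros Hc Hg eps He.
  set (A := Rabs (c t) + 1). set (B := vnorm (g' t) + 1). set (C := vnorm (g t) + 1).
  assert (HA : 0 < A) by (unfold A; pose proof (Rabs_pos (c t)); lra).
  assert (HB : 0 < B) by (unfold B; pose proof (vnorm_nonneg _ (g' t)); lra).
  assert (HC : 0 < C) by (unfold C; pose proof (vnorm_nonneg _ (g t)); lra).
  destruct (rdat_cont I c c' t Hc (Rmin 1 (eps / (3 * B)))) as [d1 [Hd1 K1]].
  apply Rmin_pos. lra. apply Rdiv_lt_0_compat; lra.
  destruct (Hg (eps / (3 * A))) as [d2 [Hd2 K2]]. apply Rdiv_lt_0_compat; lra.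
  destruct (Hc (eps / (3 * C))) as [d3 [Hd3 K3]]. apply Rdiv_lt_0_compat; lra.
  exists (Rmin d1 (Rmin d2 d3)). split. repeat apply Rmin_pos; auto.
  intros h Hh Ih.
  assert (h1 : Rabs h < d1) by (eapply Rlt_le_trans; [apply Hh| apply Rmin_l]).
  assert (h2 : Rabs h < d2) by (eapply Rlt_le_trans; [apply Hh| eapply Rle_trans; [apply Rmin_r|apply Rmin_l]]).
  assert (h3 : Rabs h < d3) by (eapply Rlt_le_trans; [apply Hh| eapply Rle_trans; [apply Rmin_r|apply Rmin_r]]).
  specialize (K1 h h1 Ih). specialize (K2 h h2 Ih). specialize (K3 h h3 Ih).
  set (Dg := vsub (vsub (g (t + h)) (g t)) (vscal h (g' t))) in *.
  replace (vsub (vsub (vscal (c (t + h)) (g (t + h))) (vscal (c t) (g t))) (vscal h (vadd (vscal c' (g t)) (vscal (c t) (g' t)))))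
   with (vadd (vadd (vscal (c (t + h)) Dg) (vscal (h * (c (t + h) - c t)) (g' t))) (vscal (c (t + h) - c t - h * c') (g t))).
  2:{ unfold Dg, vsub; vring. }
  eapply Rle_trans. apply vnorm_triangle. eapply Rle_trans. apply Rplus_le_compat_r. apply vnorm_triangle.
  rewrite !vnorm_scal. rewrite Rabs_mult.
  assert (Ec : Rabs (c (t + h)) <= A).
  { unfold A. replace (c (t + h)) with (c t + (c (t + h) - c t)) by ring.
    eapply Rle_trans. apply Rabs_triang. pose proof (Rmin_l 1 (eps / (3 * B))). lra. }
  assert (E2 : Rabs (c (t + h) - c t) * vnorm (g' t) <= eps / 3).
  { apply Rle_trans with (eps / (3 * B) * B). apply Rmult_le_compat. apply Rabs_pos. apply vnorm_nonneg.
    pose proof (Rmin_r 1 (eps / (3 * B))). lra. unfold B; lra. right; field; lra. }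
  pose proof (vnorm_nonneg _ Dg). pose proof (Rabs_pos h). pose proof (Rabs_pos (c (t + h))).
  pose proof (Rabs_pos (c (t + h) - c t - h * c')).
  assert (T1 : Rabs (c (t + h)) * vnorm Dg <= eps / 3 * Rabs h).
  { apply Rle_trans with (A * (eps / (3 * A) * Rabs h)). apply Rmult_le_compat; auto. right; field; lra. }
  assert (T3 : Rabs (c (t + h) - c t - h * c') * vnorm (g t) <= eps / 3 * Rabs h).
  { apply Rle_trans with (eps / (3 * C) * Rabs h * C). apply Rmult_le_compat; auto. apply vnorm_nonneg. unfold C; lra.
    right; field; lra. }
  assert (T2 : Rabs h * Rabs (c (t + h) - c t) * vnorm (g' t) <= eps / 3 * Rabs h).
  { rewrite Rmult_assoc. rewrite Rmult_comm. apply Rmult_le_compat_r; auto. }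
  lra.
Qed.
End Calc.

End M_B.
Import M_B.

Module M_B2.

Definition rcat (I : R -> Prop) (c : R -> R) (t : R) : Prop :=
  forall eps, 0 < eps -> exists d, 0 < d /\ forall s, I s -> Rabs (s - t) < d -> Rabs (c s - c t) < eps.
Lemma rcat_of_cont I c t : continuity_pt c t -> rcat I c t.
Proof.
  intros H eps He. destruct (H eps He) as [d [Hd K]]. exists d; split; auto.
  intros s _ Hs. destruct (Req_dec s t) as [->|Hn]. replace (c t - c t) with 0 by ring; rewrite Rabs_R0; auto.
  apply (K s). split. split. constructor. apply not_eq_sym; auto. simpl; unfold R_dist; auto.
Qed.

Section Cont.
Variable X : Banach.
Lemma cat_add I (g k : R -> X) t : cat X I g t -> cat X I k t -> cat X I (fun s => vadd (g s) (k s)) t.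
Proof.
  intros H1 H2 eps He. destruct (H1 (eps/2)) as [d1 [Hd1 K1]]. lra. destruct (H2 (eps/2)) as [d2 [Hd2 K2]]. lra.
  exists (Rmin d1 d2); split. apply Rmin_pos; auto.
  intros s Is Hs. specialize (K1 s Is ltac:(eapply Rlt_le_trans; [apply Hs| apply Rmin_l])).
  specialize (K2 s Is ltac:(eapply Rlt_le_trans; [apply Hs| apply Rmin_r])).
  replace (vsub (vadd (g s) (k s)) (vadd (g t) (k t))) with (vadd (vsub (g s) (g t)) (vsub (k s) (k t))) by (unfold vsub; vring).
  eapply Rle_lt_trans. apply vnorm_triangle. lra.
Qed.
Lemma cat_const I (v : X) t : cat X I (fun _ => v) t.
Proof.
  intros eps He. exists 1; split. lra. intros. replace (vsub v v) with (@vzero X) by (unfold vsub; vring).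
  rewrite vnorm_0; auto.
Qed.
Lemma cat_op I (A : X -> X) g t : bounded_linear A -> cat X I g t -> cat X I (fun s => A (g s)) t.
Proof.
  intros HA H eps He. destruct (bl_bound _ A HA) as [M [HM HAM]].
  destruct (H (eps / M)) as [d [Hd K]]. apply Rdiv_lt_0_compat; auto.
  exists d; split; auto. intros s Is Hs. rewrite <- bl_sub; auto. eapply Rle_lt_trans. apply HAM.
  apply Rlt_le_trans with (M * (eps / M)). apply Rmult_lt_compat_l; auto. right; field; lra.
Qed.
Lemma cat_prod I (c : R -> R) (g : R -> X) t : rcat I c t -> cat X I g t -> cat X I (fun s => vscal (c s) (g s)) t.
Proof.
  intros Hc Hg eps He.
  set (A := Rabs (c t) + 1). set (C := vnorm (g t) + 1).
  assert (HA : 0 < A) by (unfold A; pose proof (Rabs_pos (c t)); lra).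
  assert (HC : 0 < C) by (unfold C; pose proof (vnorm_nonneg _ (g t)); lra).
  destruct (Hc (Rmin 1 (eps / (2 * C)))) as [d1 [Hd1 K1]]. apply Rmin_pos. lra. apply Rdiv_lt_0_compat; lra.
  destruct (Hg (eps / (2 * (A + 1)))) as [d2 [Hd2 K2]]. apply Rdiv_lt_0_compat; lra.
  exists (Rmin d1 d2); split. apply Rmin_pos; auto.
  intros s Is Hs. specialize (K1 s Is ltac:(eapply Rlt_le_trans; [apply Hs| apply Rmin_l])).
  specialize (K2 s Is ltac:(eapply Rlt_le_trans; [apply Hs| apply Rmin_r])).
  replace (vsub (vscal (c s) (g s)) (vscal (c t) (g t))) with (vadd (vscal (c s) (vsub (g s) (g t))) (vscal (c s - c t) (g t))) by (unfold vsub; vring).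
  eapply Rle_lt_trans. apply vnorm_triangle. rewrite !vnorm_scal.
  assert (Ec : Rabs (c s) <= A + 1).
  { unfold A. replace (c s) with (c t + (c s - c t)) by ring.
    eapply Rle_trans. apply Rabs_triang. pose proof (Rmin_l 1 (eps / (2 * C))). lra. }
  assert (T1 : Rabs (c s) * vnorm (vsub (g s) (g t)) <= (A + 1) * (eps / (2 * (A + 1)))).
  { apply Rmult_le_compat; auto. apply Rabs_pos. apply vnorm_nonneg. lra. }
  assert (T2 : Rabs (c s - c t) * vnorm (g t) <= eps / (2 * C) * C).
  { apply Rmult_le_compat. apply Rabs_pos. apply vnorm_nonneg. pose proof (Rmin_r 1 (eps / (2 * C))). lra. unfold C; lra. }
  assert ((A + 1) * (eps / (2 * (A + 1))) = eps / 2) by (field; lra).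
  assert (eps / (2 * C) * C = eps / 2) by (field; lra).
  assert (Rabs (c s) * vnorm (vsub (g s) (g t)) < eps / 2 \/ Rabs (c s - c t) * vnorm (g t) < eps / 2 \/ True) by auto.
  destruct (Req_dec (vnorm (vsub (g s) (g t))) 0) as [E0|E0].
  - rewrite E0, Rmult_0_r. pose proof (Rmin_r 1 (eps / (2 * C))).
    assert (Rabs (c s - c t) * vnorm (g t) < eps / (2 * C) * C).
    { apply Rle_lt_trans with (Rabs (c s - c t) * C). apply Rmult_le_compat_l. apply Rabs_pos. unfold C; lra.
      apply Rmult_lt_compat_r; lra. }
    lra.
  - assert (Rabs (c s) * vnorm (vsub (g s) (g t)) < (A + 1) * (eps / (2 * (A + 1)))).
    { apply Rle_lt_trans with ((A + 1) * vnorm (vsub (g s) (g t))). apply Rmult_le_compat_r; auto. apply vnorm_nonneg.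
      apply Rmult_lt_compat_l; lra. }
    lra.
Qed.
Lemma cat_scal I a (g : R -> X) t : cat X I g t -> cat X I (fun s => vscal a (g s)) t.
Proof. intros; apply cat_prod with (c := fun _ => a); auto. intros e He; exists 1; split; [lra|]. intros. replace (a - a) with 0 by ring; rewrite Rabs_R0; auto. Qed.
Lemma cat_opp I (g : R -> X) t : cat X I g t -> cat X I (fun s => vopp (g s)) t.
Proof. intros H. apply cat_ext_all with (g := fun s => vscal (-1) (g s)). intros; now rewrite vopp_scal. now apply cat_scal. Qed.
Lemma cat_sub I (g k : R -> X) t : cat X I g t -> cat X I k t -> cat X I (fun s => vsub (g s) (k s)) t.
Proof. intros; unfold vsub; apply cat_add; auto; apply cat_opp; auto. Qed.
Lemma cat_vsum I n (g : nat -> R -> X) t : (forall i, (i < n)%nat -> cat X I (g i) t) ->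
  cat X I (fun s => vsum n (fun i => g i s)) t.
Proof.
  induction n; intros H; simpl. apply cat_const.
  apply (cat_add I (fun s => vsum n (fun i => g i s)) (g n)); auto.
Qed.
Lemma cat_comp I J (g : R -> X) (u : R -> R) t : (forall s, I s -> J (u s)) -> I t -> rcat I u t ->
  cat X J g (u t) -> cat X I (fun s => g (u s)) t.
Proof.
  intros HIJ It Hu Hg eps He. destruct (Hg eps He) as [d [Hd K]]. destruct (Hu d Hd) as [d' [Hd' K']].
  exists d'; split; [auto|]. intros s Is Hs. apply K; auto.
Qed.

Lemma dat_unique I (g g1 g2 : R -> X) t : dat X I g g1 t -> dat X I g g2 t ->
  (forall d, 0 < d -> exists h, h <> 0 /\ Rabs h < d /\ I (t + h)) -> g1 t = g2 t.
Proof.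
  intros H1 H2 HI. apply vnorm_small_eq. intros eps He.
  destruct (H1 (eps / 4)) as [d1 [Hd1 K1]]. lra. destruct (H2 (eps / 4)) as [d2 [Hd2 K2]]. lra.
  destruct (HI (Rmin d1 d2)) as [h [Hn [Hh Ih]]]. apply Rmin_pos; auto.
  specialize (K1 h ltac:(eapply Rlt_le_trans; [apply Hh| apply Rmin_l]) Ih).
  specialize (K2 h ltac:(eapply Rlt_le_trans; [apply Hh| apply Rmin_r]) Ih).
  assert (E : vscal h (vsub (g1 t) (g2 t)) = vsub (vsub (vsub (g (t + h)) (g t)) (vscal h (g2 t))) (vsub (vsub (g (t + h)) (g t)) (vscal h (g1 t)))) by (unfold vsub; vring).
  assert (N : Rabs h * vnorm (vsub (g1 t) (g2 t)) <= eps / 2 * Rabs h).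
  { rewrite <- vnorm_scal, E. eapply Rle_trans. apply vnorm_sub_le. lra. }
  assert (0 < Rabs h) by (apply Rabs_pos_lt; auto).
  assert (vnorm (vsub (g1 t) (g2 t)) <= eps / 2) by (apply Rmult_le_reg_l with (Rabs h); auto; lra).
  lra.
Qed.
Lemma Icc_dense a b t : a < b -> a <= t <= b -> forall d, 0 < d -> exists h, h <> 0 /\ Rabs h < d /\ Icc a b (t + h).
Proof.
  intros Hab Ht d Hd. unfold Icc. destruct (Rle_lt_dec t ((a + b) / 2)).
  - exists (Rmin (d / 2) ((b - a) / 2)). assert (0 < Rmin (d / 2) ((b - a) / 2)) by (apply Rmin_pos; lra).
    pose proof (Rmin_l (d / 2) ((b - a) / 2)). pose proof (Rmin_r (d / 2) ((b - a) / 2)).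
    repeat split; try lra. rewrite Rabs_right; lra.
  - exists (- Rmin (d / 2) ((b - a) / 2)). assert (0 < Rmin (d / 2) ((b - a) / 2)) by (apply Rmin_pos; lra).
    pose proof (Rmin_l (d / 2) ((b - a) / 2)). pose proof (Rmin_r (d / 2) ((b - a) / 2)).
    repeat split; try lra. rewrite Rabs_left; lra.
Qed.
Lemma Ici_dense a t : a <= t -> forall d, 0 < d -> exists h, h <> 0 /\ Rabs h < d /\ Ici a (t + h).
Proof.
  intros Ht d Hd. exists (d / 2). unfold Ici. repeat split; try lra. rewrite Rabs_right; lra.
Qed.
End Cont.

End M_B2.
Import M_B2.

Module M_C.

Lemma le_eps_le x y : (forall e, 0 < e -> x <= y + e) -> x <= y.
Proof.
  intros H. destruct (Rle_lt_dec x y); auto. specialize (H ((x - y) / 2)). lra.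
Qed.

Section MVI.
Variable X : Banach.

Lemma mvi_eta (H H' : R -> X) a b M eta : a <= b -> 0 < eta ->
  (forall s, a <= s <= b -> dat X (Icc a b) H H' s) ->
  (forall s, a <= s <= b -> vnorm (H' s) <= M) ->
  vnorm (vsub (H b) (H a)) <= (M + eta) * (b - a) + eta.
Proof.
  intros Hab He HD HM.
  assert (M0 : 0 <= M) by (eapply Rle_trans; [apply vnorm_nonneg| apply (HM a); lra]).
  set (E := fun s => a <= s <= b /\ forall u, a <= u <= s -> vnorm (vsub (H u) (H a)) <= (M + eta) * (u - a) + eta).
  assert (Ea : E a).
  { split. lra. intros u Hu. replace u with a by lra. replace (vsub (H a) (H a)) with (@vzero X) by (unfold vsub; vring).
    rewrite vnorm_0. lra. }
  assert (Eb : bound E) by (exists b; intros s [Hs _]; lra).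
  destruct (completeness E Eb (ex_intro _ a Ea)) as [c [Hub Hlub]].
  assert (Hac : a <= c) by (apply Hub; auto).
  assert (Hcb : c <= b) by (apply Hlub; intros s [Hs _]; lra).
  assert (Below : forall u, a <= u < c -> vnorm (vsub (H u) (H a)) <= (M + eta) * (u - a) + eta).
  { intros u Hu. destruct (classic (exists s, E s /\ u < s)) as [[s [[_ Es] Hs]]|Hn].
    apply Es; lra.
    assert (c <= u). { apply Hlub. intros s Es. destruct (Rle_lt_dec s u); auto. exfalso; apply Hn; eauto. }
    lra. }
  assert (Atc : vnorm (vsub (H c) (H a)) <= (M + eta) * (c - a) + eta).
  { destruct (Req_dec c a) as [->|Hca].
    - replace (vsub (H a) (H a)) with (@vzero X) by (unfold vsub; vring). rewrite vnorm_0. lra.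
    - apply le_eps_le. intros e Hep.
      destruct (dat_cont X (Icc a b) H H' c ltac:(unfold Icc; lra) (HD c ltac:(lra)) e Hep) as [d [Hd K]].
      set (u := Rmax a (c - d / 2)).
      assert (Hu1 : a <= u) by apply Rmax_l. assert (Hu2 : c - d / 2 <= u) by apply Rmax_r.
      assert (Hu3 : u < c) by (unfold u; apply Rmax_lub_lt; lra).
      specialize (K u ltac:(unfold Icc; lra) ltac:(rewrite Rabs_left; lra)).
      specialize (Below u ltac:(lra)).
      eapply Rle_trans. apply (vnorm_sub_tri X _ (H u)). rewrite vsub_sym.
      assert ((M + eta) * (u - a) <= (M + eta) * (c - a)) by (apply Rmult_le_compat_l; lra).
      lra. }
  assert (Hcb' : c = b).
  { destruct (Req_dec c b); auto. exfalso.
    destruct (HD c ltac:(lra) eta He) as [d [Hd K]].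
    set (h := Rmin (d / 2) (b - c)).
    assert (Hh : 0 < h) by (apply Rmin_pos; lra).
    assert (Hh1 : h <= d / 2) by apply Rmin_l. assert (Hh2 : h <= b - c) by apply Rmin_r.
    assert (E (c + h)).
    { split. lra. intros u Hu. destruct (Rle_lt_dec u c). 
      - destruct (Req_dec u c) as [->|]. auto. apply Below; lra.
      - specialize (K (u - c) ltac:(rewrite Rabs_right; lra) ltac:(unfold Icc; lra)).
        replace (c + (u - c)) with u in K by ring.
        replace (vsub (H u) (H a)) with (vadd (vsub (vsub (H u) (H c)) (vscal (u - c) (H' c))) (vadd (vscal (u - c) (H' c)) (vsub (H c) (H a)))) by (unfold vsub; vring).
        eapply Rle_trans. apply vnorm_triangle. eapply Rle_trans. apply Rplus_le_compat_l. apply vnorm_triangle.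
        rewrite vnorm_scal. rewrite Rabs_right in * by lra.
        assert ((u - c) * vnorm (H' c) <= (u - c) * M) by (apply Rmult_le_compat_l; [lra| apply HM; lra]).
        nra. }
    assert (c + h <= c) by (apply Hub; auto). lra. }
  subst c. auto.
Qed.

Lemma mvi (H H' : R -> X) a b M : a <= b ->
  (forall s, a <= s <= b -> dat X (Icc a b) H H' s) ->
  (forall s, a <= s <= b -> vnorm (H' s) <= M) ->
  vnorm (vsub (H b) (H a)) <= M * (b - a).
Proof.
  intros Hab HD HM. apply le_eps_le. intros e He.
  set (eta := e / (b - a + 2)). assert (Het : 0 < eta) by (apply Rdiv_lt_0_compat; lra).
  eapply Rle_trans. apply (mvi_eta H H' a b M eta); auto.
  assert (eta * (b - a + 1) <= e).
  { unfold eta. apply Rle_trans with (e / (b - a + 2) * (b - a + 2)). apply Rmult_le_compat_l; [left; apply Rdiv_lt_0_compat; lra | lra].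
    right; field; lra. }
  nra.
Qed.
End MVI.

End M_C.
Import M_C.

Module M_D.

Definition is_part (a b : R) (d : R) (n : nat) (p xi : nat -> R) : Prop :=
  p O = a /\ p n = b /\ (forall i, (i < n)%nat -> p i <= xi i <= p (S i) /\ p (S i) - p i < d).

Lemma part_mono a b d n p xi : is_part a b d n p xi -> forall i j, (i <= j <= n)%nat -> p i <= p j.
Proof.
  intros [_ [_ H]] i j. induction j; intros Hij. replace i with O by lia; lra.
  destruct (Nat.eq_dec i (S j)). subst; lra.
  eapply Rle_trans. apply IHj; lia. destruct (H j ltac:(lia)); lra.
Qed.
Lemma part_in a b d n p xi : is_part a b d n p xi -> forall i, (i <= n)%nat -> a <= p i <= b.
Proof.
  intros HP i Hi. pose proof (part_mono _ _ _ _ _ _ HP). destruct HP as [H0 [Hn _]].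
  split. rewrite <- H0; apply H; lia. rewrite <- Hn; apply H; lia.
Qed.
Lemma part_tag_in a b d n p xi : is_part a b d n p xi -> forall i, (i < n)%nat -> a <= xi i <= b.
Proof.
  intros HP i Hi. pose proof (part_in _ _ _ _ _ _ HP i ltac:(lia)). pose proof (part_in _ _ _ _ _ _ HP (S i) ltac:(lia)).
  destruct HP as [_ [_ HH]]. destruct (HH i Hi). lra.
Qed.
Lemma part_le a b d n p xi : is_part a b d n p xi -> a <= b.
Proof. intros HP. pose proof (part_in _ _ _ _ _ _ HP O ltac:(lia)). destruct HP as [H0 _]. lra. Qed.
Lemma part_weaken a b d d' n p xi : d <= d' -> is_part a b d n p xi -> is_part a b d' n p xi.
Proof. intros Hd [H0 [H1 H2]]. split; auto. split; auto. intros i Hi. destruct (H2 i Hi). split; auto; lra. Qed.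

Definition upart (a b : R) (n : nat) (i : nat) : R := a + INR i * ((b - a) / INR n).
Lemma upart_is a b n d : a <= b -> (0 < n)%nat -> (b - a) / INR n < d -> is_part a b d n (upart a b n) (upart a b n).
Proof.
  intros Hab Hn Hd. assert (0 < INR n) by (apply lt_0_INR; lia).
  assert (0 <= (b - a) / INR n) by (apply Rmult_le_pos; [lra| left; apply Rinv_0_lt_compat; auto]).
  unfold upart. split. simpl; ring. split. field; lra.
  intros i Hi. rewrite S_INR. split; [|lra]. split; nra.
Qed.
Lemma upart_exists a b d : a <= b -> 0 < d -> exists n, (0 < n)%nat /\ (b - a) / INR n < d /\
  forall m, (n <= m)%nat -> (b - a) / INR m < d.
Proof.
  intros Hab Hd. destruct (archimed ((b - a) / d)) as [H1 _].
  set (k := Z.to_nat (up ((b - a) / d))). exists (S k). split. lia.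
  assert (Hk : (b - a) / d < INR (S k)).
  { unfold k. rewrite S_INR. destruct (Z_le_gt_dec 0 (up ((b - a) / d))).
    rewrite INR_IZR_INZ, Z2Nat.id; auto. lra.
    assert (0 <= (b - a) / d) by (apply Rmult_le_pos; [lra| left; apply Rinv_0_lt_compat; auto]).
    apply Z.gt_lt in g. apply IZR_lt in g. pose proof (pos_INR (Z.to_nat (up ((b - a) / d)))). lra. }
  assert (forall m, (S k <= m)%nat -> (b - a) / INR m < d).
  { intros m Hm. apply le_INR in Hm. assert (0 < INR (S k)) by (apply lt_0_INR; lia).
    apply Rmult_lt_reg_r with (INR m / d). apply Rdiv_lt_0_compat; lra.
    replace ((b - a) / INR m * (INR m / d)) with ((b - a) / d) by (field; lra).
    replace (d * (INR m / d)) with (INR m) by (field; lra). lra. }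
  split; auto.
Qed.

Section Int.
Variable X : Banach.
Definition RS (g : R -> X) n (p xi : nat -> R) : X := vsum n (fun i => vscal (p (S i) - p i) (g (xi i))).

Lemma is_RInt_iff g a b I : is_RInt g a b I <-> forall eps, 0 < eps -> exists d, 0 < d /\
  forall n p xi, is_part a b d n p xi -> vnorm (vsub (RS g n p xi) I) < eps.
Proof.
  unfold is_RInt, is_part, RS. split; intros H eps He; destruct (H eps He) as [d [Hd K]]; exists d; (split; [auto|]).
  intros n p xi [H0 [H1 H2]]. auto. intros n p xi H0 H1 H2; auto.
Qed.

Lemma is_RInt_unique (g : R -> X) a b I J : a <= b -> is_RInt g a b I -> is_RInt g a b J -> I = J.
Proof.
  intros Hab HI HJ. rewrite is_RInt_iff in HI, HJ. apply vnorm_small_eq. intros eps He.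
  destruct (HI (eps / 2)) as [d1 [Hd1 K1]]. lra. destruct (HJ (eps / 2)) as [d2 [Hd2 K2]]. lra.
  destruct (upart_exists a b (Rmin d1 d2) Hab ltac:(apply Rmin_pos; auto)) as [n [Hn [Hs _]]].
  pose proof (upart_is a b n _ Hab Hn Hs) as HP.
  specialize (K1 _ _ _ (part_weaken _ _ _ _ _ _ _ (Rmin_l d1 d2) HP)).
  specialize (K2 _ _ _ (part_weaken _ _ _ _ _ _ _ (Rmin_r d1 d2) HP)).
  eapply Rle_lt_trans. apply (vnorm_sub_tri X _ (RS g n (upart a b n) (upart a b n))).
  rewrite vsub_sym. lra.
Qed.

Ltac rm_bash := unfold Rmax, Rmin in *;
  repeat match goal with |- context [Rle_dec ?p ?q] => destruct (Rle_dec p q) | H : context [Rle_dec ?p ?q] |- _ => destruct (Rle_dec p q) end; lra.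
Definition ov (x y u v : R) : R := Rmax 0 (Rmin y v - Rmax x u).
Lemma ov_split x y c d e : x <= y -> c <= d <= e -> ov x y c e = ov x y c d + ov x y d e.
Proof.
  intros Hxy Hcde. unfold ov, Rmax, Rmin.
  repeat match goal with |- context [Rle_dec ?p ?q] => destruct (Rle_dec p q) | H : context [Rle_dec ?p ?q] |- _ => destruct (Rle_dec p q) end; lra.
Qed.
Lemma ov_sum x y a b d m q eta : x <= y -> is_part a b d m q eta ->
  rsum m (fun j => ov x y (q j) (q (S j))) = ov x y a b.
Proof.
  intros Hxy HP. pose proof (part_mono _ _ _ _ _ _ HP) as Mo. destruct HP as [H0 [Hm _]].
  rewrite <- H0, <- Hm. clear H0 Hm. induction m. simpl. unfold ov. rm_bash.
  simpl. rewrite IHm by (intros; apply Mo; lia). rewrite <- ov_split; auto. split; apply Mo; lia.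
Qed.
Lemma ov_inside x y c d : c <= x -> x <= y -> y <= d -> ov x y c d = y - x.
Proof. intros; unfold ov. rm_bash. Qed.
Lemma ov_comm x y u v : ov x y u v = ov u v x y.
Proof. unfold ov. rewrite (Rmin_comm y v), (Rmax_comm x u). auto. Qed.
Lemma ov_nonneg x y u v : 0 <= ov x y u v.
Proof. apply Rmax_l. Qed.
Lemma ov_pos_near x y u v s t : x <= s <= y -> u <= t <= v -> 0 < ov x y u v -> Rabs (s - t) <= (y - x) + (v - u).
Proof.
  intros Hs Ht H. unfold ov in H. unfold Rabs; destruct Rcase_abs; rm_bash.
Qed.

Lemma RS_close (g : R -> X) a b d eps n p xi m q eta :
  (forall u v, a <= u <= b -> a <= v <= b -> Rabs (u - v) <= 2 * d -> vnorm (vsub (g u) (g v)) <= eps) ->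
  is_part a b d n p xi -> is_part a b d m q eta ->
  vnorm (vsub (RS g n p xi) (RS g m q eta)) <= eps * (b - a).
Proof.
  intros Hg HP HQ.
  pose proof (part_mono _ _ _ _ _ _ HP) as MP. pose proof (part_mono _ _ _ _ _ _ HQ) as MQ.
  set (w := fun i j => ov (p i) (p (S i)) (q j) (q (S j))).
  assert (E1 : RS g n p xi = vsum n (fun i => vsum m (fun j => vscal (w i j) (g (xi i))))).
  { unfold RS. apply vsum_ext. intros i Hi. rewrite vsum_rsum_scal. f_equal.
    assert (Pi : p i <= p (S i)) by (apply MP; lia).
    unfold w. rewrite (ov_sum _ _ a b d m q eta Pi HQ).
    pose proof (part_in _ _ _ _ _ _ HP i ltac:(lia)). pose proof (part_in _ _ _ _ _ _ HP (S i) ltac:(lia)).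
    rewrite ov_inside; lra. }
  assert (E2 : RS g m q eta = vsum n (fun i => vsum m (fun j => vscal (w i j) (g (eta j))))).
  { rewrite vsum_swap. unfold RS. apply vsum_ext. intros j Hj. rewrite vsum_rsum_scal. f_equal.
    unfold w. erewrite rsum_ext. 2: intros; apply ov_comm.
    assert (Qj : q j <= q (S j)) by (apply MQ; lia).
    rewrite (ov_sum _ _ a b d n p xi Qj HP).
    pose proof (part_in _ _ _ _ _ _ HQ j ltac:(lia)). pose proof (part_in _ _ _ _ _ _ HQ (S j) ltac:(lia)).
    rewrite ov_inside; lra. }
  rewrite E1, E2, <- vsum_sub. eapply Rle_trans. apply vsum_norm.
  apply Rle_trans with (rsum n (fun i => rsum m (fun j => eps * w i j))).
  - apply rsum_le. intros i Hi. eapply Rle_trans. rewrite <- vsum_sub. apply vsum_norm.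
    apply rsum_le. intros j Hj.
    replace (vsub (vscal (w i j) (g (xi i))) (vscal (w i j) (g (eta j)))) with (vscal (w i j) (vsub (g (xi i)) (g (eta j)))) by (unfold vsub; vring).
    rewrite vnorm_scal. rewrite Rabs_right by (apply Rle_ge, ov_nonneg).
    destruct (Rle_lt_or_eq_dec 0 (w i j) (ov_nonneg _ _ _ _)) as [Hw|Hw].
    + rewrite Rmult_comm. apply Rmult_le_compat_r. lra. apply Hg.
      apply (part_tag_in _ _ _ _ _ _ HP i Hi). apply (part_tag_in _ _ _ _ _ _ HQ j Hj).
      destruct HP as [_ [_ HP]]. destruct HQ as [_ [_ HQ]]. destruct (HP i Hi). destruct (HQ j Hj).
      eapply Rle_trans. apply (ov_pos_near _ _ _ _ _ _ H H1 Hw). lra.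
    + rewrite <- Hw. lra.
  - right. erewrite rsum_ext. 2: intros; apply rsum_scal. rewrite rsum_scal. f_equal.
    erewrite rsum_ext. 2:{ intros i Hi. assert (Pi : p i <= p (S i)) by (apply MP; lia).
      unfold w. rewrite (ov_sum _ _ a b d m q eta Pi HQ).
      pose proof (part_in _ _ _ _ _ _ HP i ltac:(lia)). pose proof (part_in _ _ _ _ _ _ HP (S i) ltac:(lia)).
      rewrite ov_inside by lra. reflexivity. }
    rewrite rsum_tel. destruct HP as [H0 [Hn _]]. rewrite H0, Hn. auto.
Qed.
End Int.

End M_D.
Import M_D.

Module M_D2.

Section Exist.
Variable X : Banach.

Lemma unif_cont (g : R -> X) a b : a <= b -> continuous_on (Icc a b) g ->
  forall eps, 0 < eps -> exists d, 0 < d /\ forall u v, a <= u <= b -> a <= v <= b -> Rabs (u - v) < d ->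
    vnorm (vsub (g u) (g v)) <= eps.
Proof.
  intros Hab Hc eps He.
  set (A := fun s => a <= s <= b /\ exists d, 0 < d /\ forall u v, a <= u <= s -> a <= v <= s -> Rabs (u - v) < d ->
    vnorm (vsub (g u) (g v)) <= eps).
  assert (Aa : A a).
  { split. lra. exists 1; split. lra. intros u v Hu Hv _. replace u with a by lra; replace v with a by lra.
    replace (vsub (g a) (g a)) with (@vzero X) by (unfold vsub; vring). rewrite vnorm_0; lra. }
  assert (Ab : bound A) by (exists b; intros s [Hs _]; lra).
  destruct (completeness A Ab (ex_intro _ a Aa)) as [c [Hub Hlub]].
  assert (Hac : a <= c) by (apply Hub; auto).
  assert (Hcb : c <= b) by (apply Hlub; intros s [Hs _]; lra).
  destruct (Hc c ltac:(unfold Icc; lra) (eps / 2) ltac:(lra)) as [dc [Hdc Kc]].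
  assert (Hs : exists s, A s /\ c - dc / 2 < s).
  { destruct (classic (exists s, A s /\ c - dc / 2 < s)) as [H|Hn]; auto.
    assert (c <= c - dc / 2). { apply Hlub. intros s As. destruct (Rle_lt_dec s (c - dc / 2)); auto. exfalso; apply Hn; eauto. }
    lra. }
  destruct Hs as [s [As Hs2]]. assert (Hsc : s <= c) by (apply Hub; auto).
  destruct As as [Hs1 [ds [Hds Ks]]].
  set (s' := Rmin b (c + dc / 2)).
  assert (S1 : s' <= b) by apply Rmin_l. assert (S2 : s' <= c + dc / 2) by apply Rmin_r.
  assert (As' : A s').
  { split. split. unfold s'. apply Rmin_glb; lra. apply Rmin_l.
    exists (Rmin ds (dc / 2)). split. apply Rmin_pos; lra.
    intros u v Hu Hv Huv. pose proof (Rmin_l ds (dc / 2)). pose proof (Rmin_r ds (dc / 2)).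
    assert (Huv' : u - v < dc / 2 /\ - (dc / 2) < u - v) by (apply Rabs_def2; lra).
    destruct (Rle_lt_dec u s); destruct (Rle_lt_dec v s).
    - apply Ks; auto; lra.
    - assert (Iu : Rabs (u - c) < dc) by (unfold Rabs; destruct Rcase_abs; lra).
      assert (Iv : Rabs (v - c) < dc). { clear Huv. unfold Rabs. destruct Rcase_abs. lra. lra. }
      pose proof (Kc u ltac:(unfold Icc; lra) Iu). pose proof (Kc v ltac:(unfold Icc; lra) Iv).
      eapply Rle_trans. apply (vnorm_sub_tri X _ (g c)). rewrite (vsub_sym X (g c)). lra.
    - assert (Iu : Rabs (u - c) < dc) by (unfold Rabs; destruct Rcase_abs; lra).
      assert (Iv : Rabs (v - c) < dc) by (unfold Rabs; destruct Rcase_abs; lra).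
      pose proof (Kc u ltac:(unfold Icc; lra) Iu). pose proof (Kc v ltac:(unfold Icc; lra) Iv).
      eapply Rle_trans. apply (vnorm_sub_tri X _ (g c)). rewrite (vsub_sym X (g c)). lra.
    - assert (Iu : Rabs (u - c) < dc) by (unfold Rabs; destruct Rcase_abs; lra).
      assert (Iv : Rabs (v - c) < dc) by (unfold Rabs; destruct Rcase_abs; lra).
      pose proof (Kc u ltac:(unfold Icc; lra) Iu). pose proof (Kc v ltac:(unfold Icc; lra) Iv).
      eapply Rle_trans. apply (vnorm_sub_tri X _ (g c)). rewrite (vsub_sym X (g c)). lra. }
  assert (s' <= c) by (apply Hub; auto).
  assert (Hsb : s' = b).
  { unfold s' in *. destruct (Rle_dec b (c + dc / 2)). rewrite Rmin_left; auto. rewrite Rmin_right in H; lra. }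
  rewrite Hsb in As'. destruct As' as [_ [d [Hd K]]]. exists d; split; [auto|].
  intros u v Hu Hv Huv. apply K; lra.
Qed.

Lemma RInt_exists (g : R -> X) a b : a <= b -> continuous_on (Icc a b) g -> exists I, is_RInt g a b I.
Proof.
  intros Hab Hc.
  set (Sq := fun k : nat => RS X g (S k) (upart a b (S k)) (upart a b (S k))).
  assert (Key : forall eps, 0 < eps -> exists d, 0 < d /\ forall n p xi m q eta, is_part a b d n p xi -> is_part a b d m q eta ->
     vnorm (vsub (RS X g n p xi) (RS X g m q eta)) < eps).
  { intros eps He. destruct (unif_cont g a b Hab Hc (eps / (b - a + 1))) as [d [Hd K]].
    apply Rdiv_lt_0_compat; lra.
    exists (d / 3). split. lra. intros n p xi m q eta HP HQ.
    eapply Rle_lt_trans. apply (RS_close X g a b (d / 3) (eps / (b - a + 1))); auto.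
    intros u v Hu Hv Huv. apply K; auto. lra.
    apply Rlt_le_trans with (eps / (b - a + 1) * (b - a + 1)).
    apply Rmult_lt_compat_l. apply Rdiv_lt_0_compat; lra. lra. right; field; lra. }
  assert (SP : forall d, 0 < d -> exists N, forall k, (N <= k)%nat -> is_part a b d (S k) (upart a b (S k)) (upart a b (S k))).
  { intros d Hd. destruct (upart_exists a b d Hab Hd) as [N [HN [_ HN2]]]. exists N. intros k Hk.
    apply upart_is; [auto|lia|apply HN2; lia]. }
  destruct (vcomplete Sq) as [L HL].
  { intros eps He. destruct (Key eps He) as [d [Hd K]]. destruct (SP d Hd) as [N HN].
    exists N. intros m n Hm Hn. apply K; auto. }
  exists L. rewrite is_RInt_iff. intros eps He.
  destruct (Key (eps / 2) ltac:(lra)) as [d [Hd K]]. exists d; split; [auto|].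
  intros n p xi HP. destruct (SP d Hd) as [N1 HN1]. destruct (HL (eps / 2) ltac:(lra)) as [N2 HN2].
  specialize (HN1 (max N1 N2) ltac:(lia)). specialize (HN2 (max N1 N2) ltac:(lia)).
  specialize (K _ _ _ _ _ _ HP HN1).
  eapply Rle_lt_trans. apply (vnorm_sub_tri X _ (Sq (max N1 N2))). unfold Sq in *. unfold vsub in *. lra.
Qed.

Definition Rint (g : R -> X) (a b : R) : X :=
  match excluded_middle_informative (exists I, is_RInt g a b I) with
  | left H => proj1_sig (constructive_indefinite_description _ H)
  | right _ => vzero
  end.

Lemma Rint_spec (g : R -> X) a b : (exists I, is_RInt g a b I) -> is_RInt g a b (Rint g a b).
Proof.
  intros H. unfold Rint. destruct excluded_middle_informative. 
  destruct constructive_indefinite_description; auto. contradiction.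
Qed.
Lemma Rint_cont (g : R -> X) a b : a <= b -> continuous_on (Icc a b) g -> is_RInt g a b (Rint g a b).
Proof. intros; apply Rint_spec, RInt_exists; auto. Qed.
Lemma Rint_eq (g : R -> X) a b I : a <= b -> is_RInt g a b I -> Rint g a b = I.
Proof. intros Hab H. apply (is_RInt_unique X g a b); auto. apply Rint_spec; eauto. Qed.
End Exist.

End M_D2.
Import M_D2.

Module M_D3.

Section IntProps.
Variable X : Banach.
Implicit Types g k : R -> X.

Lemma is_RInt_add g k a b I J : is_RInt g a b I -> is_RInt k a b J -> is_RInt (fun s => vadd (g s) (k s)) a b (vadd I J).
Proof.
  rewrite !is_RInt_iff. intros H1 H2 eps He.
  destruct (H1 (eps / 2) ltac:(lra)) as [d1 [Hd1 K1]]. destruct (H2 (eps / 2) ltac:(lra)) as [d2 [Hd2 K2]].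
  exists (Rmin d1 d2); split. apply Rmin_pos; auto. intros n p xi HP.
  specialize (K1 _ _ _ (part_weaken _ _ _ _ _ _ _ (Rmin_l d1 d2) HP)).
  specialize (K2 _ _ _ (part_weaken _ _ _ _ _ _ _ (Rmin_r d1 d2) HP)).
  unfold RS in *. rewrite (vsum_ext _ _ _ (fun i => vadd (vscal (p (S i) - p i) (g (xi i))) (vscal (p (S i) - p i) (k (xi i))))).
  rewrite vsum_add.
  replace (vsub (vadd (vsum n (fun i => vscal (p (S i) - p i) (g (xi i)))) (vsum n (fun i => vscal (p (S i) - p i) (k (xi i))))) (vadd I J))
    with (vadd (vsub (vsum n (fun i => vscal (p (S i) - p i) (g (xi i)))) I) (vsub (vsum n (fun i => vscal (p (S i) - p i) (k (xi i)))) J)) by (unfold vsub; vring).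
  eapply Rle_lt_trans. apply vnorm_triangle. lra.
  intros; apply vscal_distr_v.
Qed.
Lemma is_RInt_op (A : X -> X) g a b I : bounded_linear A -> is_RInt g a b I -> is_RInt (fun s => A (g s)) a b (A I).
Proof.
  rewrite !is_RInt_iff. intros HA H eps He. destruct (bl_bound _ A HA) as [M [HM HAM]].
  destruct (H (eps / M)) as [d [Hd K]]. apply Rdiv_lt_0_compat; auto.
  exists d; split; auto. intros n p xi HP. specialize (K _ _ _ HP).
  unfold RS in *. rewrite (vsum_ext _ _ _ (fun i => A (vscal (p (S i) - p i) (g (xi i))))).
  rewrite <- bl_vsum, <- bl_sub; auto. eapply Rle_lt_trans. apply HAM.
  apply Rlt_le_trans with (M * (eps / M)). apply Rmult_lt_compat_l; auto. right; field; lra.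
  intros; rewrite bl_scal; auto.
Qed.
Lemma is_RInt_scal g a b I c : is_RInt g a b I -> is_RInt (fun s => vscal c (g s)) a b (vscal c I).
Proof.
  intros H. apply (is_RInt_op (fun v => vscal c v)); auto.
  split; [|split]. intros; apply vscal_distr_v. intros; rewrite !vscal_assoc; f_equal; ring.
  exists (Rabs c). intros; rewrite vnorm_scal; lra.
Qed.
Lemma is_RInt_opp g a b I : is_RInt g a b I -> is_RInt (fun s => vopp (g s)) a b (vopp I).
Proof.
  intros H. apply (is_RInt_op (fun v => vopp v)); auto.
  split; [|split]. intros; unfold vsub; vring. intros; unfold vsub; vring.
  exists 1. intros; rewrite vnorm_opp; lra.
Qed.
Lemma is_RInt_sub g k a b I J : is_RInt g a b I -> is_RInt k a b J -> is_RInt (fun s => vsub (g s) (k s)) a b (vsub I J).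
Proof. intros; unfold vsub. apply is_RInt_add; auto. apply is_RInt_opp; auto. Qed.
Lemma is_RInt_ext g k a b I : (forall s, a <= s <= b -> g s = k s) -> is_RInt g a b I -> is_RInt k a b I.
Proof.
  rewrite !is_RInt_iff. intros E H eps He. destruct (H eps He) as [d [Hd K]]. exists d; split; auto.
  intros n p xi HP. specialize (K _ _ _ HP). unfold RS in *.
  rewrite (vsum_ext _ _ _ (fun i => vscal (p (S i) - p i) (g (xi i)))); auto.
  intros i Hi. rewrite E; auto. apply (part_tag_in _ _ _ _ _ _ HP i Hi).
Qed.
Lemma is_RInt_const (v : X) a b : is_RInt (fun _ => v) a b (vscal (b - a) v).
Proof.
  rewrite !is_RInt_iff. intros eps He. exists 1; split. lra. intros n p xi [H0 [Hn _]].
  unfold RS. rewrite vsum_rsum_scal, rsum_tel, H0, Hn.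
  replace (vsub (vscal (b - a) v) (vscal (b - a) v)) with (@vzero X) by (unfold vsub; vring). rewrite vnorm_0; auto.
Qed.
Lemma is_RInt_zero a b : is_RInt (fun _ => @vzero X) a b vzero.
Proof. pose proof (is_RInt_const vzero a b). rewrite vscal_0r in H. auto. Qed.
Lemma is_RInt_point g a : is_RInt g a a vzero.
Proof.
  rewrite !is_RInt_iff. intros eps He. exists 1; split. lra. intros n p xi HP.
  pose proof (part_mono _ _ _ _ _ _ HP) as M. destruct HP as [H0 [Hn _]].
  unfold RS. rewrite (vsum_ext _ _ _ (fun _ => vzero)). rewrite vsum_zero.
  replace (vsub vzero vzero) with (@vzero X) by (unfold vsub; vring). rewrite vnorm_0; auto.
  intros i Hi. assert (p i = a) by (pose proof (M O i ltac:(lia)); pose proof (M i n ltac:(lia)); lra).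
  assert (p (S i) = a) by (pose proof (M O (S i) ltac:(lia)); pose proof (M (S i) n ltac:(lia)); lra).
  rewrite H, H1. replace (a - a) with 0 by ring. apply vscal_0l.
Qed.
Lemma is_RInt_shift g a b c I : is_RInt g a b I -> is_RInt (fun s => g (s + c)) (a - c) (b - c) I.
Proof.
  rewrite !is_RInt_iff. intros H eps He. destruct (H eps He) as [d [Hd K]]. exists d; split; auto.
  intros n p xi [H0 [Hn Hi]]. 
  specialize (K n (fun i => p i + c) (fun i => xi i + c)).
  unfold RS in *. erewrite vsum_ext. apply K.
  split. rewrite H0; ring. split. rewrite Hn; ring. intros i Hi'. destruct (Hi i Hi'). split; lra.
  intros i Hi'. simpl. f_equal. ring.
Qed.
Lemma is_RInt_bound g a b I M : a <= b -> is_RInt g a b I -> (forall s, a <= s <= b -> vnorm (g s) <= M) ->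
  vnorm I <= M * (b - a).
Proof.
  intros Hab H HM. rewrite is_RInt_iff in H. apply le_eps_le. intros e He.
  destruct (H e He) as [d [Hd K]].
  destruct (upart_exists a b d Hab Hd) as [n [Hn [Hs _]]].
  pose proof (upart_is a b n _ Hab Hn Hs) as HP. specialize (K _ _ _ HP).
  assert (vnorm (RS X g n (upart a b n) (upart a b n)) <= M * (b - a)).
  { unfold RS. eapply Rle_trans. apply vsum_norm.
    apply Rle_trans with (rsum n (fun i => M * (upart a b n (S i) - upart a b n i))).
    apply rsum_le. intros i Hi. destruct HP as [_ [_ HP']]. destruct (HP' i Hi).
    rewrite vnorm_scal, Rabs_right by lra. rewrite Rmult_comm. apply Rmult_le_compat_r. lra.
    apply HM. apply (part_tag_in _ _ _ _ _ _ (upart_is a b n _ Hab Hn Hs) i Hi).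
    rewrite rsum_scal, rsum_tel. right. f_equal. unfold upart. simpl. field. apply not_0_INR; lia. }
  pose proof (vnorm_sub_tri X I (RS X g n (upart a b n) (upart a b n)) vzero).
  replace (vsub I vzero) with I in H1 by (unfold vsub; vring).
  replace (vsub (RS X g n (upart a b n) (upart a b n)) vzero) with (RS X g n (upart a b n) (upart a b n)) in H1 by (unfold vsub; vring).
  rewrite vsub_sym in H1. lra.
Qed.

Definition pcat n1 (p1 p2 : nat -> R) i := if Nat.leb i n1 then p1 i else p2 (i - n1)%nat.
Definition xcat n1 (x1 x2 : nat -> R) i := if Nat.ltb i n1 then x1 i else x2 (i - n1)%nat.
Lemma pcat_is a b c d n1 p1 x1 n2 p2 x2 : is_part a b d n1 p1 x1 -> is_part b c d n2 p2 x2 ->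
  is_part a c d (n1 + n2) (pcat n1 p1 p2) (xcat n1 x1 x2).
Proof.
  intros [A0 [An A]] [B0 [Bn B]]. unfold pcat, xcat. split; [|split].
  - simpl. auto.
  - destruct (Nat.leb_spec (n1 + n2) n1). replace n2 with O in * by lia. rewrite Nat.add_0_r. lra.
    replace (n1 + n2 - n1)%nat with n2 by lia. auto.
  - intros i Hi. destruct (Nat.ltb_spec i n1).
    + rewrite (proj2 (Nat.leb_le i n1)) by lia. rewrite (proj2 (Nat.leb_le (S i) n1)) by lia. apply A; auto.
    + rewrite (proj2 (Nat.leb_gt (S i) n1)) by lia. destruct (Nat.leb_spec i n1).
      * replace i with n1 by lia. rewrite Nat.sub_diag, An, <- B0. replace (S n1 - n1)%nat with (S O) by lia.
        apply B; lia.
      * replace (S i - n1)%nat with (S (i - n1)) by lia. apply B; lia.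
Qed.
Lemma pcat_RS (g : R -> X) b n1 p1 x1 n2 p2 x2 : p1 n1 = b -> p2 O = b ->
  RS X g (n1 + n2) (pcat n1 p1 p2) (xcat n1 x1 x2) = vadd (RS X g n1 p1 x1) (RS X g n2 p2 x2).
Proof.
  intros H1 H2. unfold RS. rewrite vsum_split. f_equal.
  - apply vsum_ext. intros i Hi. unfold pcat, xcat.
    rewrite (proj2 (Nat.leb_le i n1)) by lia. rewrite (proj2 (Nat.leb_le (S i) n1)) by lia.
    rewrite (proj2 (Nat.ltb_lt i n1)) by lia. auto.
  - apply vsum_ext. intros i Hi. unfold pcat, xcat.
    rewrite (proj2 (Nat.leb_gt (S (n1 + i)) n1)) by lia. rewrite (proj2 (Nat.ltb_ge (n1 + i) n1)) by lia.
    replace (S (n1 + i) - n1)%nat with (S i) by lia. replace (n1 + i - n1)%nat with i by lia.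
    destruct (Nat.leb_spec (n1 + i) n1).
    + replace i with O by lia. rewrite Nat.add_0_r, H1, H2. auto.
    + auto.
Qed.

Lemma cont_sub I J g : (forall s, J s -> I s) -> continuous_on I g -> continuous_on J g.
Proof.
  rewrite !cont_iff. intros HJI H t Jt. apply cat_local with I. apply H; auto.
  exists 1; split. lra. intros; auto.
Qed.

Lemma is_RInt_chasles g a b c I J : a <= b -> b <= c -> continuous_on (Icc a c) g ->
  is_RInt g a b I -> is_RInt g b c J -> is_RInt g a c (vadd I J).
Proof.
  intros Hab Hbc Hc HI HJ. assert (HK := Rint_cont X g a c ltac:(lra) Hc).
  replace (vadd I J) with (Rint X g a c); auto.
  rewrite is_RInt_iff in HI, HJ, HK. apply vnorm_small_eq. intros eps He.
  destruct (HI (eps / 3) ltac:(lra)) as [d1 [Hd1 K1]]. destruct (HJ (eps / 3) ltac:(lra)) as [d2 [Hd2 K2]].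
  destruct (HK (eps / 3) ltac:(lra)) as [d3 [Hd3 K3]].
  set (d := Rmin d1 (Rmin d2 d3)). assert (Hd : 0 < d) by (repeat apply Rmin_pos; auto).
  assert (D1 : d <= d1) by apply Rmin_l. assert (D2 : d <= d2) by (eapply Rle_trans; [apply Rmin_r|apply Rmin_l]).
  assert (D3 : d <= d3) by (eapply Rle_trans; [apply Rmin_r|apply Rmin_r]).
  destruct (upart_exists a b d Hab Hd) as [n1 [Hn1 [Hs1 _]]]. destruct (upart_exists b c d Hbc Hd) as [n2 [Hn2 [Hs2 _]]].
  pose proof (upart_is a b n1 _ Hab Hn1 Hs1) as P1. pose proof (upart_is b c n2 _ Hbc Hn2 Hs2) as P2.
  pose proof (pcat_is _ _ _ _ _ _ _ _ _ _ P1 P2) as P.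
  specialize (K1 _ _ _ (part_weaken _ _ _ _ _ _ _ D1 P1)). specialize (K2 _ _ _ (part_weaken _ _ _ _ _ _ _ D2 P2)).
  specialize (K3 _ _ _ (part_weaken _ _ _ _ _ _ _ D3 P)).
  rewrite (pcat_RS g b) in K3. 2: apply P1. 2: apply P2.
  set (S1 := RS X g n1 (upart a b n1) (upart a b n1)) in *. set (S2 := RS X g n2 (upart b c n2) (upart b c n2)) in *.
  replace (vsub (Rint X g a c) (vadd I J)) with (vadd (vsub (Rint X g a c) (vadd S1 S2)) (vadd (vsub S1 I) (vsub S2 J))) by (unfold vsub; vring).
  eapply Rle_lt_trans. apply vnorm_triangle. rewrite vsub_sym. eapply Rle_lt_trans. apply Rplus_le_compat_l. apply vnorm_triangle. lra.
Qed.

Lemma dat_lin I (v : X) t : dat X I (fun s => vscal s v) (fun _ => v) t.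
Proof.
  intros eps He. exists 1; split. lra. intros h _ _.
  replace (vsub (vsub (vscal (t + h) v) (vscal t v)) (vscal h v)) with (@vzero X) by (unfold vsub; vring).
  rewrite vnorm_0. pose proof (Rabs_pos h); nra.
Qed.

Lemma ftc2 (G g : R -> X) a b : a <= b -> (forall s, a <= s <= b -> dat X (Icc a b) G g s) ->
  continuous_on (Icc a b) g -> is_RInt g a b (vsub (G b) (G a)).
Proof.
  intros Hab HD Hc. rewrite is_RInt_iff. intros eps He.
  set (e' := eps / (b - a + 2)). assert (He' : 0 < e') by (apply Rdiv_lt_0_compat; lra).
  destruct (unif_cont X g a b Hab Hc e' He') as [d [Hd K]].
  exists d; split; auto. intros n p xi HP.
  pose proof (part_mono _ _ _ _ _ _ HP) as Mo. pose proof HP as [H0 [Hn HPi]].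
  replace (vsub (G b) (G a)) with (vsum n (fun i => vsub (G (p (S i))) (G (p i)))) by (pose proof (vsum_tel X n (fun i => G (p i))) as T; simpl in T; rewrite T, H0, Hn; auto).
  unfold RS. rewrite <- vsum_sub. eapply Rle_lt_trans. apply vsum_norm.
  apply Rle_lt_trans with (rsum n (fun i => e' * (p (S i) - p i))).
  - apply rsum_le. intros i Hi. destruct (HPi i Hi) as [Hx Hst].
    pose proof (part_in _ _ _ _ _ _ HP i ltac:(lia)). pose proof (part_in _ _ _ _ _ _ HP (S i) ltac:(lia)).
    set (Hf := fun s => vsub (G s) (vscal s (g (xi i)))).
    assert (MV := mvi X Hf (fun s => vsub (g s) (g (xi i))) (p i) (p (S i)) e' ltac:(lra)).
    replace (vsub (vscal (p (S i) - p i) (g (xi i))) (vsub (G (p (S i))) (G (p i)))) with (vopp (vsub (Hf (p (S i))) (Hf (p i)))) by (unfold Hf, vsub; vring).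
    rewrite vnorm_opp. apply MV.
    + intros s Hs. apply dat_sub. apply dat_local with (Icc a b). apply HD; lra.
      exists 1; split. lra. unfold Icc; intros; lra.
      apply dat_lin.
    + intros s Hs. apply K; try lra. unfold Rabs; destruct Rcase_abs; lra.
  - rewrite rsum_scal, rsum_tel, H0, Hn. 
    apply Rlt_le_trans with (e' * (b - a + 2)). apply Rmult_lt_compat_l; lra. right; unfold e'; field; lra.
Qed.
End IntProps.

End M_D3.
Import M_D3.

Module M_D4.

Section FTC1.
Variable X : Banach.

Lemma Rint_chasles (g : R -> X) a b c : a <= b -> b <= c -> continuous_on (Icc a c) g ->
  Rint X g a c = vadd (Rint X g a b) (Rint X g b c).
Proof.
  intros Hab Hbc Hc. apply Rint_eq. lra. apply is_RInt_chasles with b; auto.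
  apply Rint_cont; auto. apply cont_sub with (Icc a c); auto. unfold Icc; intros; lra.
  apply Rint_cont; auto. apply cont_sub with (Icc a c); auto. unfold Icc; intros; lra.
Qed.

Lemma Rint_near (g : R -> X) u v t eps : u <= v -> continuous_on (Icc u v) g ->
  (forall s, u <= s <= v -> vnorm (vsub (g s) (g t)) <= eps) ->
  vnorm (vsub (Rint X g u v) (vscal (v - u) (g t))) <= eps * (v - u).
Proof.
  intros Huv Hc Hb. apply is_RInt_bound with (g := fun s => vsub (g s) (g t)) (a := u) (b := v); auto.
  apply is_RInt_sub. apply Rint_cont; auto. apply is_RInt_const.
Qed.

Lemma ftc1 (g : R -> X) a b : a <= b -> continuous_on (Icc a b) g ->
  forall t, a <= t <= b -> dat X (Icc a b) (fun u => Rint X g a u) g t.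
Proof.
  intros Hab Hc t Ht eps He.
  destruct (Hc t ltac:(unfold Icc; lra) eps He) as [d [Hd K]].
  exists d; split; auto. intros h Hh Ih. unfold Icc in Ih. apply Rabs_def2 in Hh.
  destruct (Rle_lt_dec 0 h).
  - rewrite (Rint_chasles g a t (t + h)); try lra. 2: apply cont_sub with (Icc a b); auto; unfold Icc; intros; lra.
    replace (vsub (vsub (vadd (Rint X g a t) (Rint X g t (t + h))) (Rint X g a t)) (vscal h (g t)))
      with (vsub (Rint X g t (t + h)) (vscal (t + h - t) (g t))) by (replace (t + h - t) with h by ring; unfold vsub; vring).
    rewrite Rabs_right by lra. replace h with (t + h - t) at 3 by ring.
    apply Rint_near. lra. apply cont_sub with (Icc a b); auto; unfold Icc; intros; lra.
    intros s Hs. left. apply K. unfold Icc; lra. unfold Rabs; destruct Rcase_abs; lra.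
  - rewrite (Rint_chasles g a (t + h) t); try lra. 2: apply cont_sub with (Icc a b); auto; unfold Icc; intros; lra.
    replace (vsub (vsub (Rint X g a (t + h)) (vadd (Rint X g a (t + h)) (Rint X g (t + h) t))) (vscal h (g t)))
      with (vopp (vsub (Rint X g (t + h) t) (vscal (t - (t + h)) (g t)))) by (replace (t - (t + h)) with (- h) by ring; unfold vsub; vring).
    rewrite vnorm_opp, Rabs_left by lra. replace (- h) with (t - (t + h)) by ring.
    apply Rint_near. lra. apply cont_sub with (Icc a b); auto; unfold Icc; intros; lra.
    intros s Hs. left. apply K. unfold Icc; lra. unfold Rabs; destruct Rcase_abs; lra.
Qed.

Lemma ftc1_Ici (g : R -> X) a : continuous_on (Ici a) g ->
  forall t, a <= t -> dat X (Ici a) (fun u => Rint X g a u) g t.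
Proof.
  intros Hc t Ht. apply dat_local with (Icc a (t + 1)).
  apply ftc1. lra. apply cont_sub with (Ici a); auto. unfold Icc, Ici; intros; lra. lra.
  exists 1; split. lra. unfold Icc, Ici; intros s Hs Hst. unfold Rabs in Hst; destruct Rcase_abs; lra.
Qed.
End FTC1.

End M_D4.
Import M_D4.

Module M_E.

Definition tp (n : nat) (u : R) : R := (Rmax 0 u) ^ n / INR (fact n).

Lemma tp_neg n u : (1 <= n)%nat -> u <= 0 -> tp n u = 0.
Proof.
  intros Hn Hu. unfold tp. rewrite Rmax_left by lra. destruct n. lia. simpl. unfold Rdiv. ring.
Qed.
Lemma tp_pos n u : 0 <= u -> tp n u = u ^ n / INR (fact n).
Proof. intros Hu. unfold tp. rewrite Rmax_right by lra. auto. Qed.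
Lemma tp_0 u : tp 0 u = 1.
Proof. unfold tp. simpl. field. Qed.

Lemma up_facts t tau : 0 < tau -> - tau <= t ->
  (0 <= up (t / tau))%Z /\ t < INR (Z.to_nat (up (t / tau))) * tau /\ (INR (Z.to_nat (up (t / tau))) - 1) * tau <= t.
Proof.
  intros Ht Hm. destruct (archimed (t / tau)) as [H1 H2].
  assert (t / tau >= -1). { apply Rle_ge. apply Rmult_le_reg_r with tau; auto. unfold Rdiv. rewrite Rmult_assoc, Rinv_l; lra. }
  assert (Hz : (0 <= up (t / tau))%Z). { apply le_IZR. assert (-1 < IZR (up (t / tau))) by lra.
    apply lt_IZR in H0. apply IZR_le. lia. }
  split; auto. rewrite INR_IZR_INZ, Z2Nat.id by auto.
  split.
  - apply Rmult_lt_reg_r with (/ tau). apply Rinv_0_lt_compat; auto. rewrite Rmult_assoc, Rinv_r by lra. rewrite Rmult_1_r. auto.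
  - apply Rmult_le_reg_r with (/ tau). apply Rinv_0_lt_compat; auto. rewrite Rmult_assoc, Rinv_r by lra. rewrite Rmult_1_r.
    unfold Rdiv in H2. lra.
Qed.

Lemma up_mono x y : x <= y -> (up x <= up y)%Z.
Proof.
  intros H. destruct (archimed x) as [H1 H2]. destruct (archimed y) as [H3 H4].
  assert (IZR (up x) < IZR (up y) + 1) by lra. rewrite <- plus_IZR in H0. apply lt_IZR in H0. lia.
Qed.

Section Exp.
Variable X : Banach.
Variable tau : R.
Hypothesis Htau : 0 < tau.

Lemma exp_closed (A : X -> X) t v N : - tau <= t -> (Z.to_nat (up (t / tau)) <= N)%nat ->
  exp_tau tau A t v = vsum (S N) (fun j => vscal (tp j (t - (INR j - 1) * tau)) (Nat.iter j A v)).
Proof.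
  intros Ht HN. unfold exp_tau. destruct (Rlt_dec t (- tau)). lra.
  destruct (up_facts t tau Htau Ht) as [_ [Hk1 Hk2]].
  set (k := Z.to_nat (up (t / tau))) in *.
  replace (S N) with (S k + (N - k))%nat by lia. rewrite vsum_split.
  rewrite (vsum_ext X (N - k)%nat _ (fun _ => vzero)). rewrite vsum_zero, vadd_0r.
  - apply vsum_ext. intros j Hj. f_equal. rewrite tp_pos. auto.
    assert (INR j <= INR k) by (apply le_INR; lia). nra.
  - intros j Hj. rewrite tp_neg. apply vscal_0l. lia.
    rewrite plus_INR, S_INR. pose proof (pos_INR j). nra.
Qed.

Lemma up_bound t T : - tau <= t -> t <= T -> (Z.to_nat (up (t / tau)) <= Z.to_nat (up (T / tau)))%nat.
Proof.
  intros H1 H2. apply Z2Nat.inj_le. apply up_facts; auto. apply up_facts; auto; lra.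
  apply up_mono. unfold Rdiv. apply Rmult_le_compat_r. left; apply Rinv_0_lt_compat; auto. auto.
Qed.
End Exp.

End M_E.
Import M_E.

Module M_E2.

Section KC.
Variable X : Banach.
Variable tau : R.
Hypothesis Htau : 0 < tau.
Variables Om Ominv : X -> X.
Hypothesis HOm : bounded_linear Om.
Hypothesis HOmi : bounded_linear Ominv.
Hypothesis Hinv : forall v, Ominv (Om v) = v.

Definition pw n v := Nat.iter n Om v.
Lemma pw_bl n : bounded_linear (pw n).
Proof. apply bl_iter; auto. Qed.
Lemma pw_S n v : pw (S n) v = Om (pw n v).
Proof. reflexivity. Qed.
Lemma pw_SS n v : pw (S (S n)) v = Om (Om (pw n v)).
Proof. reflexivity. Qed.
Lemma pw_comm n v : pw n (Om v) = Om (pw n v).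
Proof. induction n; simpl; auto. unfold pw in *; simpl. rewrite IHn; auto. Qed.

Lemma iter_neg n v : Nat.iter n (fun y => vopp (Om y)) v = vscal ((-1) ^ n) (pw n v).
Proof.
  induction n; simpl. rewrite vscal_one; auto.
  rewrite IHn. rewrite (bl_scal X Om) by auto. rewrite vopp_scal, vscal_assoc. f_equal.
Qed.
Lemma pow_m1_even m : (-1) ^ (2 * m) = 1.
Proof. rewrite pow_mult. replace ((-1) ^ 2) with 1 by ring. apply pow1. Qed.
Lemma pow_m1_odd m : (-1) ^ (S (2 * m)) = -1.
Proof. change ((-1) ^ (S (2 * m))) with (-1 * (-1) ^ (2 * m)). rewrite pow_m1_even. ring. Qed.

Definition Mof (T : R) : nat := S (Z.to_nat (up (T / tau))).
Lemma Mof_spec u T : u <= T -> (Z.to_nat (up (u / tau)) < 2 * Mof T)%nat.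
Proof.
  intros H. unfold Mof. assert (Hm : (up (u / tau) <= up (T / tau))%Z).
  { apply up_mono. unfold Rdiv. apply Rmult_le_compat_r; auto. left; apply Rinv_0_lt_compat; auto. }
  lia.
Qed.

Definition Csum M u v := vsum M (fun m => vscal (tp (2 * m) (u - (INR (2 * m) - 1) * tau)) (pw (2 * m) v)).
Definition Ksum M u v := vsum M (fun m => vscal (tp (S (2 * m)) (u - INR (2 * m) * tau)) (pw (2 * m) v)).

Lemma x1_closed u v M : - tau <= u -> (Z.to_nat (up (u / tau)) < 2 * M)%nat -> x1 tau Om u v = Csum M u v.
Proof.
  intros Hu HM. unfold x1. rewrite !(exp_closed X tau Htau _ u v (pred (2 * M))); auto; try lia.
  replace (S (pred (2 * M))) with (2 * M)%nat by lia.
  rewrite <- vsum_add, <- vsum_scal, vsum_pairs. unfold Csum. apply vsum_ext. intros m Hm.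
  rewrite !iter_neg, pow_m1_even, pow_m1_odd. fold (pw (2 * m) v). fold (pw (S (2 * m)) v).
  vring.
Qed.

Lemma x2_closed u v M : (Z.to_nat (up (u / tau)) < 2 * M)%nat -> x2 tau Om Ominv u v = Ksum M u v.
Proof.
  intros HM. destruct (Rlt_dec u (- tau)) as [Hl|Hl].
  - unfold x2, exp_tau. destruct (Rlt_dec u (- tau)); try lra.
    replace (vsub vzero vzero) with (@vzero X) by (unfold vsub; vring). rewrite bl_zero, vscal_0r; auto.
    unfold Ksum. rewrite (vsum_ext _ _ _ (fun _ => vzero)). rewrite vsum_zero; auto.
    intros m Hm. rewrite tp_neg. apply vscal_0l. lia. pose proof (pos_INR (2 * m)). nra.
  - unfold x2. rewrite !(exp_closed X tau Htau _ u v (pred (2 * M))); auto; try lra; try lia.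
    replace (S (pred (2 * M))) with (2 * M)%nat by lia.
    rewrite <- vsum_sub, vsum_pairs. rewrite bl_vsum, <- vsum_scal by auto. unfold Ksum. apply vsum_ext. intros m Hm.
    rewrite !iter_neg, pow_m1_even, pow_m1_odd. fold (pw (2 * m) v). change (Nat.iter (S (2 * m)) Om v) with (Om (pw (2 * m) v)).
    replace (INR (S (2 * m)) - 1) with (INR (2 * m)) by (rewrite S_INR; ring).
    set (c0 := tp (2 * m) (u - (INR (2 * m) - 1) * tau)). set (c1 := tp (S (2 * m)) (u - INR (2 * m) * tau)).
    change (pw (S (2 * m)) v) with (Om (pw (2 * m) v)).
    replace (vadd (vsub (vscal c0 (pw (2 * m) v)) (vscal c0 (vscal 1 (pw (2 * m) v))))
          (vsub (vscal c1 (Om (pw (2 * m) v))) (vscal c1 (vscal (-1) (Om (pw (2 * m) v))))))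
      with (vscal (2 * c1) (Om (pw (2 * m) v))) by (unfold vsub; vring).
    rewrite bl_scal, Hinv by auto. rewrite vscal_assoc. f_equal. field.
Qed.
End KC.

End M_E2.
Import M_E2.

Module M_E3.

Lemma dpl_refl_comp f c s0 l : derivable_pt_lim f (c - s0) l -> derivable_pt_lim (fun s => f (c - s)) s0 (- l).
Proof.
  intros H. assert (H1 : derivable_pt_lim (fun s => c - s) s0 (-1)).
  { apply derivable_pt_lim_ext with (f := (fct_cte c - id)%F). intros; unfold fct_cte, id, minus_fct; auto.
    replace (-1) with (0 - 1) by ring. apply derivable_pt_lim_minus. apply derivable_pt_lim_const. apply derivable_pt_lim_id. }
  pose proof (derivable_pt_lim_comp (fun s => c - s) f s0 (-1) l H1 H).
  replace (- l) with (l * -1) by ring. apply derivable_pt_lim_ext with (f := comp f (fun s => c - s)); auto.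
Qed.

Lemma pow_le_base x k : 0 <= x <= 1 -> x ^ (S k) <= x.
Proof.
  intros H. induction k. simpl; lra. rewrite <- tech_pow_Rmult.
  assert (0 <= x ^ S k) by (apply pow_le; lra). nra.
Qed.

Lemma dpl_rmaxpow n u0 : (2 <= n)%nat -> derivable_pt_lim (fun u => (Rmax 0 u) ^ n) u0 (INR n * (Rmax 0 u0) ^ pred n).
Proof.
  intros Hn. destruct (Rtotal_order u0 0) as [Hl|[He|Hg]].
  - rewrite Rmax_left by lra. replace (INR n * 0 ^ pred n) with 0 by (destruct n; [lia| destruct n; [lia| simpl; ring]]).
    apply derivable_pt_lim_locally_ext with (f := fct_cte 0) (a := u0 - 1) (b := 0). lra.
    intros z Hz. rewrite Rmax_left by lra. unfold fct_cte. destruct n. lia. simpl; ring.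
    apply derivable_pt_lim_const.
  - subst u0. rewrite Rmax_left by lra. replace (INR n * 0 ^ pred n) with 0 by (destruct n; [lia| destruct n; [lia| simpl; ring]]).
    intros eps Heps. exists (mkposreal (Rmin 1 eps) (Rmin_pos _ _ Rlt_0_1 Heps)). simpl. intros h Hh Hhd.
    rewrite Rplus_0_l. rewrite (Rmax_left 0 0) by lra.
    replace (0 ^ n) with 0 by (destruct n; [lia| simpl; ring]).
    assert (Hh1 : Rabs h < 1) by (eapply Rlt_le_trans; [apply Hhd| apply Rmin_l]).
    assert (Hh2 : Rabs h < eps) by (eapply Rlt_le_trans; [apply Hhd| apply Rmin_r]).
    assert (HR : Rabs (Rmax 0 h) <= Rabs h). { unfold Rmax; destruct Rle_dec. lra. rewrite Rabs_R0; apply Rabs_pos. }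
    set (r := Rabs (Rmax 0 h)) in *. assert (Hr0 : 0 <= r) by apply Rabs_pos.
    assert (Hhp : 0 < Rabs h) by (apply Rabs_pos_lt; auto).
    replace ((Rmax 0 h ^ n - 0) / h - 0) with (Rmax 0 h ^ n / h) by (field; auto).
    unfold Rdiv. rewrite Rabs_mult, <- RPow_abs, Rabs_inv. fold r.
    destruct n as [|[|k]]; try lia. rewrite <- tech_pow_Rmult.
    assert (Hk : r ^ S k <= r) by (apply pow_le_base; lra).
    assert (0 <= r ^ S k) by (apply pow_le; lra).
    apply Rle_lt_trans with (r ^ S k). 
    apply Rmult_le_reg_r with (Rabs h); auto. rewrite Rmult_assoc, Rinv_l by lra. nra. lra.
  - apply derivable_pt_lim_locally_ext with (f := fun u => u ^ n) (a := 0) (b := u0 + 1). lra.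
    intros z Hz. rewrite Rmax_right by lra. auto.
    rewrite Rmax_right by lra. apply derivable_pt_lim_pow.
Qed.

Lemma dpl_tp n c s0 : (2 <= n)%nat -> derivable_pt_lim (fun s => tp n (c - s)) s0 (- tp (pred n) (c - s0)).
Proof.
  intros Hn. apply dpl_refl_comp.
  unfold tp. apply derivable_pt_lim_ext with (f := mult_real_fct (/ INR (fact n)) (fun u => (Rmax 0 u) ^ n)).
  intros; unfold mult_real_fct, Rdiv; ring.
  replace (Rmax 0 (c - s0) ^ pred n / INR (fact (pred n))) with (/ INR (fact n) * (INR n * Rmax 0 (c - s0) ^ pred n)).
  apply derivable_pt_lim_scal. apply dpl_rmaxpow; auto.
  destruct n. lia. simpl pred. rewrite fact_simpl, mult_INR. field. split; apply not_0_INR. apply fact_neq_0. lia.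
Qed.

End M_E3.
Import M_E3.

Module M_F.

Lemma rdat_ext_loc I (c c2 : R -> R) c' t : I t -> (forall s, I s -> c2 s = c s) -> rdat I c2 c' t -> rdat I c c' t.
Proof.
  intros It E H eps He. destruct (H eps He) as [d [Hd K]]. exists d; split; auto.
  intros h Hh Ih. rewrite <- !E; auto.
Qed.

Section VC.
Variable X : Banach.
Variable tau : R.
Hypothesis Htau : 0 < tau.
Variables Om Ominv : X -> X.
Hypothesis HOm : bounded_linear Om.
Hypothesis HOmi : bounded_linear Ominv.
Hypothesis Hinv : forall v, Ominv (Om v) = v.

Notation K := (x2 tau Om Ominv).
Notation C := (x1 tau Om).
Notation pw := (pw X Om).

Lemma Mof_big T : T < INR (Mof tau T) * tau.
Proof.
  unfold Mof. destruct (archimed (T / tau)) as [H1 _]. rewrite S_INR.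
  destruct (Z_le_gt_dec 0 (up (T / tau))).
  - rewrite INR_IZR_INZ, Z2Nat.id by auto.
    apply Rmult_lt_reg_r with (/ tau). apply Rinv_0_lt_compat; auto.
    rewrite Rmult_assoc, Rinv_r by lra. unfold Rdiv in H1. lra.
  - assert (IZR (up (T / tau)) <= 0) by (apply IZR_le; lia).
    assert (T < 0). { apply Rmult_lt_reg_r with (/ tau). apply Rinv_0_lt_compat; auto. unfold Rdiv in H1. lra. }
    pose proof (pos_INR (Z.to_nat (up (T / tau)))). nra.
Qed.

Lemma K_neg u v : u <= 0 -> K u v = vzero.
Proof.
  intros Hu. rewrite (x2_closed X tau Htau Om Ominv HOm HOmi Hinv u v (Mof tau 0)) by (apply Mof_spec; auto).
  unfold Ksum. rewrite (vsum_ext _ _ _ (fun _ => vzero)). apply vsum_zero.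
  intros m _. rewrite tp_neg. apply vscal_0l. lia. pose proof (pos_INR (2 * m)). nra.
Qed.

Lemma C_mtau v : C (- tau) v = v.
Proof.
  rewrite (x1_closed X tau Htau Om HOm (- tau) v (Mof tau (- tau))) by (try lra; apply Mof_spec; lra).
  unfold Csum, Mof. rewrite vsum_shift. simpl (2 * 0)%nat. rewrite tp_0. simpl pw.
  rewrite (vsum_ext _ _ _ (fun _ => vzero)). rewrite vsum_zero, vscal_one. apply vadd_0r.
  intros m _. rewrite tp_neg. apply vscal_0l. lia. assert (1 <= INR (2 * S m)) by (replace 1 with (INR 1) by reflexivity; apply le_INR; lia). nra.
Qed.

Definition am t m s := tp (S (2 * m)) (t - s - INR (2 * m) * tau).
Definition bm t m s := tp (2 * m) (t - s - INR (2 * m) * tau).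
Definition bm' t m s := match m with O => 0 | S _ => - tp (pred (2 * m)) (t - s - INR (2 * m) * tau) end.

Lemma am_deriv t a b m s0 : b <= t -> a <= s0 <= b -> rdat (Icc a b) (am t m) (- bm t m s0) s0.
Proof.
  intros Hbt Hs. destruct m.
  - apply rdat_ext_loc with (c2 := fun s => t - s - INR (2 * 0) * tau). unfold Icc; lra.
    intros s Hs'. unfold am. rewrite tp_pos. simpl. field. unfold Icc in Hs'. simpl. lra.
    unfold bm. rewrite tp_0. apply rdat_of_lim.
    apply derivable_pt_lim_ext with (f := fun s => (fun x => x) ((t - INR (2 * 0) * tau) - s)).
    intros; simpl; ring.
    apply (dpl_refl_comp (fun x => x) (t - INR (2 * 0) * tau) s0 1). apply derivable_pt_lim_id.
  - apply rdat_of_lim. unfold am, bm.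
    apply derivable_pt_lim_ext with (f := fun s => tp (S (2 * S m)) ((t - INR (2 * S m) * tau) - s)).
    intros; f_equal; ring.
    replace (t - s0 - INR (2 * S m) * tau) with ((t - INR (2 * S m) * tau) - s0) by ring.
    apply (dpl_tp (S (2 * S m))). lia.
Qed.

Lemma bm_deriv t a b m s0 : a <= s0 <= b -> rdat (Icc a b) (bm t m) (bm' t m s0) s0.
Proof.
  intros Hs. destruct m.
  - apply rdat_ext_loc with (c2 := fct_cte 1). unfold Icc; lra. intros; unfold bm, fct_cte; simpl; rewrite tp_0; auto.
    simpl bm'. apply rdat_of_lim. apply derivable_pt_lim_const.
  - apply rdat_of_lim. unfold bm, bm'.
    apply derivable_pt_lim_ext with (f := fun s => tp (2 * S m) ((t - INR (2 * S m) * tau) - s)).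
    intros; f_equal; ring.
    replace (t - s0 - INR (2 * S m) * tau) with ((t - INR (2 * S m) * tau) - s0) by ring.
    apply (dpl_tp (2 * S m)). lia.
Qed.

Definition Pf t (w w' : R -> X) s := vadd (K (t - s) (w' s)) (C (t - s - tau) (w s)).

Lemma P_deriv t a b (w w' w'' : R -> X) : b <= t ->
  (forall s, a <= s <= b -> dat X (Icc a b) w w' s) ->
  (forall s, a <= s <= b -> dat X (Icc a b) w' w'' s) ->
  forall s0, a <= s0 <= b ->
  dat X (Icc a b) (Pf t w w') (fun s => vsub (K (t - s) (w'' s)) (Om (Om (K (t - s - 2 * tau) (w s))))) s0.
Proof.
  intros Hbt Hw Hw' s0 Hs0.
  set (M := Mof tau (t - a)).
  set (term := fun m s => vadd (vscal (am t m s) (pw (2 * m) (w' s))) (vscal (bm t m s) (pw (2 * m) (w s)))).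
  set (dterm := fun m s => vadd (vadd (vscal (- bm t m s0) (pw (2 * m) (w' s))) (vscal (am t m s) (pw (2 * m) (w'' s))))
                              (vadd (vscal (bm' t m s0) (pw (2 * m) (w s))) (vscal (bm t m s) (pw (2 * m) (w' s))))).
  assert (D : dat X (Icc a b) (fun s => vsum M (fun m => term m s)) (fun s => vsum M (fun m => dterm m s)) s0).
  { apply dat_vsum. intros m Hm. unfold term, dterm. apply dat_add.
    - apply dat_prod. apply am_deriv; auto. apply dat_op. apply pw_bl; auto. apply Hw'; auto.
    - apply dat_prod. apply bm_deriv; auto. apply dat_op. apply pw_bl; auto. apply Hw; auto. }
  apply dat_ext with (g := fun s => vsum M (fun m => term m s)) (g' := fun s => vsum M (fun m => dterm m s)); auto.
  - exists 1; split. lra. intros s Hs _. unfold Icc in Hs. symmetry. unfold Pf.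
    rewrite (x2_closed X tau Htau Om Ominv HOm HOmi Hinv (t - s) (w' s) M) by (apply Mof_spec; lra).
    rewrite (x1_closed X tau Htau Om HOm (t - s - tau) (w s) M) by (try lra; apply Mof_spec; lra).
    unfold Ksum, Csum. rewrite <- vsum_add. apply vsum_ext. intros m Hm. unfold term, am, bm. f_equal. f_equal. f_equal. ring.
  - rewrite (x2_closed X tau Htau Om Ominv HOm HOmi Hinv (t - s0) (w'' s0) M) by (apply Mof_spec; lra).
    rewrite (x2_closed X tau Htau Om Ominv HOm HOmi Hinv (t - s0 - 2 * tau) (w s0) M) by (apply Mof_spec; lra).
    unfold dterm. rewrite (vsum_ext _ _ _ (fun m => vadd (vscal (am t m s0) (pw (2 * m) (w'' s0))) (vscal (bm' t m s0) (pw (2 * m) (w s0))))).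
    2:{ intros; unfold vsub; vring. }
    rewrite vsum_add. unfold vsub. f_equal.
    assert (HM := Mof_big (t - a)). fold M in HM.
    unfold Ksum. rewrite !bl_vsum by auto.
    unfold M, Mof in *. set (M0 := Z.to_nat (up ((t - a) / tau))) in *.
    rewrite vsum_shift. simpl (bm' t 0 s0). rewrite vscal_0l, vadd_zero.
    change (vsum (S M0) ?F) with (vadd (vsum M0 F) (F M0)). cbv beta.
    rewrite tp_neg. rewrite vscal_0l, bl_zero, bl_zero, vadd_0r by auto.
    rewrite vopp_scal, <- vsum_scal.
    apply vsum_ext. intros m Hm. unfold bm'.
    replace (pred (2 * S m)) with (S (2 * m)) by lia. replace (2 * S m)%nat with (S (S (2 * m))) by lia.
    rewrite bl_scal, bl_scal by auto. change (Om (Om (pw (2 * m) (w s0)))) with (pw (S (S (2 * m))) (w s0)).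
    rewrite vscal_assoc. f_equal. rewrite !S_INR. replace (t - s0 - (INR (2 * m) + 1 + 1) * tau) with (t - s0 - 2 * tau - INR (2 * m) * tau) by ring. ring.
    lia.
    rewrite S_INR in HM. pose proof (pos_INR M0). rewrite mult_INR. simpl (INR 2). nra.
Qed.
End VC.

End M_F.
Import M_F.

Module M_G1.

Lemma rcat_dpl I f s0 l : derivable_pt_lim f s0 l -> rcat I f s0.
Proof.
  intros H. apply rcat_of_cont. apply derivable_continuous_pt. exists l. exact H.
Qed.
Lemma rcat_tp I n c s0 : rcat I (fun s => tp n (c - s)) s0.
Proof.
  destruct n as [|[|n]].
  - intros e He. exists 1; split. lra. intros. rewrite !tp_0. replace (1 - 1) with 0 by ring. rewrite Rabs_R0; lra.
  - intros e He. exists e; split; auto. intros s _ Hs. unfold tp. simpl. 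
    replace (Rmax 0 (c - s) * 1 / 1 - Rmax 0 (c - s0) * 1 / 1) with (Rmax 0 (c - s) - Rmax 0 (c - s0)) by field.
    eapply Rle_lt_trans. 2: apply Hs. unfold Rmax. 
    destruct (Rle_dec 0 (c - s)); destruct (Rle_dec 0 (c - s0)); unfold Rabs; repeat destruct Rcase_abs; lra.
  - apply rcat_dpl with (- tp (pred (S (S n))) (c - s0)). apply dpl_tp. lia.
Qed.

Section KL.
Variable X : Banach.
Variable tau : R.
Hypothesis Htau : 0 < tau.
Variables Om Ominv : X -> X.
Hypothesis HOm : bounded_linear Om.
Hypothesis HOmi : bounded_linear Ominv.
Hypothesis Hinv : forall v, Ominv (Om v) = v.
Notation K := (x2 tau Om Ominv).

Lemma K_add u v w : K u (vadd v w) = vadd (K u v) (K u w).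
Proof.
  rewrite !(x2_closed X tau Htau Om Ominv HOm HOmi Hinv u _ (Mof tau u)) by (apply Mof_spec; lra).
  unfold Ksum. rewrite <- vsum_add. apply vsum_ext. intros. rewrite bl_add by (apply pw_bl; auto).
  apply vscal_distr_v.
Qed.
Lemma K_Om u v : K u (Om v) = Om (K u v).
Proof.
  rewrite !(x2_closed X tau Htau Om Ominv HOm HOmi Hinv u _ (Mof tau u)) by (apply Mof_spec; lra).
  unfold Ksum. rewrite bl_vsum by auto. apply vsum_ext. intros. rewrite bl_scal by auto. f_equal. apply pw_comm.
Qed.

Lemma cont_K (g : R -> X) c a b : a <= b -> continuous_on (Icc a b) g ->
  continuous_on (Icc a b) (fun s => K (c - s) (g s)).
Proof.
  intros Hab Hg. rewrite cont_iff in *. intros s0 Hs0.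
  set (M := Mof tau (c - a)).
  apply cat_ext with (g := fun s => vsum M (fun m => vscal (tp (S (2 * m)) ((c - INR (2 * m) * tau) - s)) (pw X Om (2 * m) (g s)))); auto.
  - exists 1; split. lra. intros s Hs _. unfold Icc in Hs.
    rewrite (x2_closed X tau Htau Om Ominv HOm HOmi Hinv _ _ M) by (apply Mof_spec; lra).
    unfold Ksum. apply vsum_ext. intros. f_equal. f_equal. ring.
  - apply cat_vsum. intros m _. apply cat_prod. apply rcat_tp. apply cat_op. apply pw_bl; auto. apply Hg; auto.
Qed.
Lemma deriv_cont I (g g' : R -> X) : has_deriv_on I g g' -> continuous_on I g.
Proof. rewrite deriv_iff, cont_iff. intros H t It. apply dat_cont with g'; auto. Qed.

Lemma cont_OOK (g : R -> X) c a b : a <= b -> continuous_on (Icc a b) g ->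
  continuous_on (Icc a b) (fun s => Om (Om (K (c - s - 2 * tau) (g s)))).
Proof.
  intros Hab Hg. pose proof (cont_K g (c - 2 * tau) a b Hab Hg) as H.
  rewrite cont_iff in *. intros s Hs. apply cat_op; auto. apply cat_op; auto.
  apply cat_ext_all with (g := fun s => K (c - 2 * tau - s) (g s)). intros; f_equal; ring. auto.
Qed.

End KL.

End M_G1.
Import M_G1.

Module M_G2.

Section Main.
Variable X : Banach.
Variable tau : R.
Hypothesis Htau : 0 < tau.
Variables Om Ominv : X -> X.
Hypothesis HOm : bounded_linear Om.
Hypothesis HOmi : bounded_linear Ominv.
Hypothesis Hinv : forall v, Ominv (Om v) = v.
Variables phi phi1 phi2 f : R -> X.
Hypothesis Hp : has_deriv_on (Icc (-2 * tau) 0) phi phi1.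
Hypothesis Hp1 : has_deriv_on (Icc (-2 * tau) 0) phi1 phi2.
Hypothesis Hp2 : continuous_on (Icc (-2 * tau) 0) phi2.
Hypothesis Hf : continuous_on (Ici 0) f.

Notation K := (x2 tau Om Ominv).
Notation C := (x1 tau Om).
Notation P := (Pf X tau Om Ominv).

Lemma left_part t b : - 2 * tau <= b -> b <= 0 -> b <= t ->
  is_RInt (fun s => vsub (K (t - s) (phi2 s)) (Om (Om (K (t - s - 2 * tau) (phi s))))) (-2 * tau) b
    (vsub (P t phi phi1 b) (P t phi phi1 (-2 * tau))).
Proof.
  intros H1 H2 H3. rewrite deriv_iff in Hp, Hp1.
  assert (Sub : forall s, Icc (-2 * tau) b s -> Icc (-2 * tau) 0 s) by (unfold Icc; intros; lra).
  apply ftc2; auto.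
  - intros s Hs. apply P_deriv; auto.
    + intros s' Hs'. apply dat_local with (Icc (-2 * tau) 0). apply Hp. unfold Icc; lra.
      exists 1; split. lra. intros; auto.
    + intros s' Hs'. apply dat_local with (Icc (-2 * tau) 0). apply Hp1. unfold Icc; lra.
      exists 1; split. lra. intros; auto.
  - apply cont_sub with (Icc (-2 * tau) 0); auto.
    assert (A1 := cont_K X tau Htau Om Ominv HOm HOmi Hinv phi2 t (-2 * tau) 0 ltac:(lra) Hp2).
    assert (A2 : continuous_on (Icc (-2 * tau) 0) phi) by (apply (deriv_cont X) with phi1; rewrite deriv_iff; auto).
    assert (A3 := cont_OOK X tau Htau Om Ominv HOm HOmi Hinv phi t (-2 * tau) 0 ltac:(lra) A2).
    rewrite cont_iff in *. intros s Hs. apply cat_sub; auto.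
Qed.
End Main.

Section Main2.
Variable X : Banach.
Variable tau : R.
Hypothesis Htau : 0 < tau.
Variables Om Ominv : X -> X.
Hypothesis HOm : bounded_linear Om.
Hypothesis HOmi : bounded_linear Ominv.
Hypothesis Hinv : forall v, Ominv (Om v) = v.
Variables phi phi1 phi2 f : R -> X.
Hypothesis Hp : has_deriv_on (Icc (-2 * tau) 0) phi phi1.
Hypothesis Hp1 : has_deriv_on (Icc (-2 * tau) 0) phi1 phi2.
Hypothesis Hp2 : continuous_on (Icc (-2 * tau) 0) phi2.
Hypothesis Hf : continuous_on (Ici 0) f.

Notation K := (x2 tau Om Ominv).
Notation C := (x1 tau Om).
Notation P := (Pf X tau Om Ominv).

Lemma vsub_eq_add (a b c : X) : vsub a b = c -> a = vadd b c.
Proof. intros H. rewrite <- H. unfold vsub; vring. Qed.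

Lemma P_end t (w w' : R -> X) : P t w w' t = w t.
Proof.
  unfold Pf. replace (t - t) with 0 by ring. replace (0 - tau) with (- tau) by ring.
  rewrite (K_neg X tau Htau Om Ominv HOm HOmi Hinv 0) by lra. rewrite (C_mtau X tau Htau Om HOm).
  apply vadd_zero.
Qed.
Lemma P_start t (w w' : R -> X) : P t w w' (-2 * tau) = vadd (K (t + 2 * tau) (w' (-2 * tau))) (C (t + tau) (w (-2 * tau))).
Proof. unfold Pf. f_equal; f_equal; ring. Qed.

Lemma formula_neg x t : classical_solution Om tau phi f x -> -2 * tau <= t -> t < 0 ->
  is_RInt (fun s => K (t - s) (phi2 s)) (-2 * tau) 0 (vsub (x t) (P t phi phi1 (-2 * tau))).
Proof.
  intros [x' [xL'' [xR'' [D1 [C1 [D2 [C2 [D3 [C3 [Eq Init]]]]]]]]]] H1 H2.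
  rewrite (Init t) by lra. rewrite <- (P_end t phi phi1).
  replace (vsub (P t phi phi1 t) (P t phi phi1 (-2 * tau))) with (vadd (vsub (P t phi phi1 t) (P t phi phi1 (-2 * tau))) vzero) by (unfold vsub; vring).
  apply is_RInt_chasles with t; try lra.
  - apply cont_K; auto. lra.
  - eapply is_RInt_ext. 2: apply (left_part X tau Htau Om Ominv HOm HOmi Hinv phi phi1 phi2 f Hp Hp1 Hp2 Hf t t); lra.
    intros s Hs. simpl. rewrite (K_neg X tau Htau Om Ominv HOm HOmi Hinv (t - s - 2 * tau)) by lra.
    rewrite !bl_zero by auto. unfold vsub; vring.
  - eapply is_RInt_ext. 2: apply is_RInt_zero.
    intros s Hs. simpl. rewrite (K_neg X tau Htau Om Ominv HOm HOmi Hinv (t - s)) by lra. auto.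
Qed.

Lemma formula_pos x t : classical_solution Om tau phi f x -> 0 <= t ->
  vsub (vsub (x t) (P t phi phi1 (-2 * tau))) (Rint X (fun s => K (t - s) (f s)) 0 t)
  = Rint X (fun s => K (t - s) (phi2 s)) (-2 * tau) 0.
Proof.
  intros [x' [xL'' [xR'' [D1 [C1 [D2 [C2 [D3 [C3 [Eq Init]]]]]]]]]] Ht.
  assert (Hx : continuous_on (Ici (-2 * tau)) x) by (apply deriv_cont with x'; auto).
  assert (Hphi : continuous_on (Icc (-2 * tau) 0) phi) by (apply deriv_cont with phi1; auto).
  rewrite deriv_iff in D1, D3.
  assert (E0 : x' 0 = phi1 0).
  { apply (dat_unique X (Icc (-2 * tau) 0) phi).
    - apply dat_ext with (g := x) (g' := x'). unfold Icc; lra.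
      exists 1; split. lra. intros s Hs _. apply Init. apply Hs. auto.
      apply dat_local with (Ici (-2 * tau)). apply D1. unfold Ici; lra.
      exists 1; split. lra. unfold Icc, Ici; intros; lra.
    - rewrite deriv_iff in Hp. apply Hp. unfold Icc; lra.
    - apply Icc_dense; lra. }
  set (H := fun s => Om (Om (K (t - s - 2 * tau) (x s)))).
  assert (HHc : continuous_on (Icc (-2 * tau) t) H).
  { apply cont_OOK; auto. lra. apply cont_sub with (Ici (-2 * tau)); auto. unfold Icc, Ici; intros; lra. }
  set (J := Rint X H (-2 * tau) (t - 2 * tau)). set (J1 := Rint X H (-2 * tau) 0). set (J3 := Rint X H 0 t).
  set (I1 := Rint X (fun s => K (t - s) (phi2 s)) (-2 * tau) 0).
  set (I2 := Rint X (fun s => K (t - s) (f s)) 0 t).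
  assert (HI1 : is_RInt (fun s => K (t - s) (phi2 s)) (-2 * tau) 0 I1).
  { apply Rint_cont. lra. apply cont_K; auto. lra. }
  assert (HI2 : is_RInt (fun s => K (t - s) (f s)) 0 t I2).
  { apply Rint_cont. lra. apply cont_K; auto. apply cont_sub with (Ici 0); auto. unfold Icc, Ici; intros; lra. }
  assert (HJ1 : is_RInt H (-2 * tau) 0 J1).
  { apply Rint_cont. lra. apply cont_sub with (Icc (-2 * tau) t); auto. unfold Icc; intros; lra. }
  assert (HJ3 : is_RInt H 0 t J3).
  { apply Rint_cont. lra. apply cont_sub with (Icc (-2 * tau) t); auto. unfold Icc; intros; lra. }
  assert (HJ : is_RInt H (-2 * tau) (t - 2 * tau) J).
  { apply Rint_cont. lra. apply cont_sub with (Icc (-2 * tau) t); auto. unfold Icc; intros; lra. }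
  assert (EJ : vadd J1 J3 = J).
  { assert (T1 := Rint_chasles X H (-2 * tau) 0 t ltac:(lra) Ht HHc).
    assert (T2 := Rint_chasles X H (-2 * tau) (t - 2 * tau) t ltac:(lra) ltac:(lra) HHc).
    assert (T3 : Rint X H (t - 2 * tau) t = vzero).
    { apply Rint_eq. lra. eapply is_RInt_ext. 2: apply is_RInt_zero. intros s Hs. unfold H.
      rewrite (K_neg X tau Htau Om Ominv HOm HOmi Hinv) by lra. rewrite !bl_zero; auto. }
    fold J1 J3 J in T1, T2. rewrite T3, vadd_0r in T2. rewrite <- T1, T2. auto. }
  assert (EL : vsub (P t phi phi1 0) (P t phi phi1 (-2 * tau)) = vsub I1 J1).
  { eapply (is_RInt_unique X _ (-2 * tau) 0). lra.
    apply (left_part X tau Htau Om Ominv HOm HOmi Hinv phi phi1 phi2 f Hp Hp1 Hp2 Hf t 0); lra.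
    apply is_RInt_sub; auto. eapply is_RInt_ext. 2: apply HJ1. intros s Hs. unfold H. rewrite Init; auto. }
  assert (ER : vsub (P t x x' t) (P t x x' 0) = vsub (vadd I2 J) J3).
  { eapply (is_RInt_unique X _ 0 t). auto.
    - apply ftc2; auto.
      + intros s Hs. apply P_deriv; auto; try lra.
        * intros s' Hs'. apply dat_local with (Ici (-2 * tau)). apply D1. unfold Ici; lra.
          exists 1; split. lra. unfold Icc, Ici; intros; lra.
        * intros s' Hs'. apply dat_local with (Ici 0). apply D3. unfold Ici; lra.
          exists 1; split. lra. unfold Icc, Ici; intros; lra.
      + assert (A1 : continuous_on (Icc 0 t) (fun s => K (t - s) (xR'' s))).
        { apply cont_K; auto. apply cont_sub with (Ici 0); auto. unfold Icc, Ici; intros; lra. }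
        assert (A2 : continuous_on (Icc 0 t) H).
        { apply cont_sub with (Icc (-2 * tau) t); auto. unfold Icc; intros; lra. }
        rewrite cont_iff in *. intros s Hs. apply cat_sub; auto.
    - apply is_RInt_sub; auto.
      eapply is_RInt_ext. 2: apply is_RInt_add. 2: exact HI2.
      2:{ pose proof (is_RInt_shift X H (-2 * tau) (t - 2 * tau) (-2 * tau) J HJ) as S.
          replace (-2 * tau - -2 * tau) with 0 in S by ring. replace (t - 2 * tau - -2 * tau) with t in S by ring. exact S. }
      intros s Hs. simpl. unfold H.
      assert (Ex : xR'' s = vadd (f s) (Om (Om (x (s - 2 * tau))))).
      { pose proof (Eq s ltac:(lra)) as E. rewrite <- E. unfold vsub; vring. }
      rewrite Ex, (K_add X tau Htau Om Ominv HOm HOmi Hinv), !(K_Om X tau Htau Om Ominv HOm HOmi Hinv).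
      f_equal. f_equal. f_equal. replace (t - (s + -2 * tau) - 2 * tau) with (t - s) by ring.
      replace (s + -2 * tau) with (s - 2 * tau) by ring. auto. }
  rewrite P_end in ER.
  assert (E00 : P t x x' 0 = P t phi phi1 0).
  { unfold Pf. rewrite E0, Init; auto. lra. }
  rewrite E00 in ER. apply vsub_eq_add in ER. apply vsub_eq_add in EL.
  rewrite ER, EL, <- EJ. fold I1 I2. unfold vsub; vring.
Qed.
End Main2.

End M_G2.
Import M_G2.

Module M_H.

Section Glue.
Variable X : Banach.
Lemma dat_glue a c (g g' : R -> X) t : a <= c -> a <= t ->
  (t <= c -> dat X (Icc a c) g g' t) -> (c <= t -> dat X (Ici c) g g' t) -> dat X (Ici a) g g' t.
Proof.
  intros Hac Hat H1 H2. destruct (Rtotal_order t c) as [Hl|[He|Hg]].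
  - apply dat_local with (Icc a c). apply H1; lra. exists (c - t); split. lra.
    unfold Icc, Ici; intros s Hs Hst. unfold Rabs in Hst; destruct Rcase_abs; lra.
  - apply dat_local with (fun s => Icc a c s \/ Ici c s). apply dat_union. apply H1; lra. apply H2; lra.
    exists 1; split. lra. unfold Icc, Ici; intros s Hs _. destruct (Rle_dec s c); [left|right]; lra.
  - apply dat_local with (Ici c). apply H2; lra. exists (t - c); split. lra.
    unfold Ici; intros s Hs Hst. unfold Rabs in Hst; destruct Rcase_abs; lra.
Qed.
Lemma cat_glue a c (g : R -> X) t : a <= c -> a <= t ->
  (t <= c -> cat X (Icc a c) g t) -> (c <= t -> cat X (Ici c) g t) -> cat X (Ici a) g t.
Proof.
  intros Hac Hat H1 H2. destruct (Rtotal_order t c) as [Hl|[He|Hg]].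
  - apply cat_local with (Icc a c). apply H1; lra. exists (c - t); split. lra.
    unfold Icc, Ici; intros s Hs Hst. unfold Rabs in Hst; destruct Rcase_abs; lra.
  - apply cat_local with (fun s => Icc a c s \/ Ici c s). apply cat_union. apply H1; lra. apply H2; lra.
    exists 1; split. lra. unfold Icc, Ici; intros s Hs _. destruct (Rle_dec s c); [left|right]; lra.
  - apply cat_local with (Ici c). apply H2; lra. exists (t - c); split. lra.
    unfold Ici; intros s Hs Hst. unfold Rabs in Hst; destruct Rcase_abs; lra.
Qed.

Lemma Rint_ext (g h : R -> X) a b : a <= b -> (forall s, a <= s <= b -> g s = h s) -> Rint X g a b = Rint X h a b.
Proof.
  intros Hab E. destruct (classic (exists I, is_RInt g a b I)) as [[I HI]|Hn].
  - rewrite (Rint_eq X g a b I Hab HI). symmetry. apply Rint_eq; auto. apply is_RInt_ext with g; auto.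
  - unfold Rint. destruct excluded_middle_informative as [e|n]. contradiction.
    destruct excluded_middle_informative as [[I HI]|n']; auto.
    exfalso. apply Hn. exists I. apply is_RInt_ext with h; auto. intros; symmetry; auto.
Qed.
Lemma Rint_0 (g : R -> X) a : Rint X g a a = vzero.
Proof. apply Rint_eq. lra. apply is_RInt_point. Qed.
End Glue.

Section Exist.
Variable X : Banach.
Variable tau : R.
Hypothesis Htau : 0 < tau.
Variable Om : X -> X.
Hypothesis HOm : bounded_linear Om.
Variables phi phi1 phi2 f : R -> X.
Hypothesis Hp : has_deriv_on (Icc (-2 * tau) 0) phi phi1.
Hypothesis Hp1 : has_deriv_on (Icc (-2 * tau) 0) phi1 phi2.
Hypothesis Hp2 : continuous_on (Icc (-2 * tau) 0) phi2.
Hypothesis Hf : continuous_on (Ici 0) f.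

Definition gy (y : R -> X) s := vadd (f s) (Om (Om (y (s - 2 * tau)))).
Definition Vy y u := Rint X (gy y) 0 u.
Definition Wy y t := Rint X (Vy y) 0 t.
Definition Phi y t := if Rle_dec t 0 then phi t else vadd (vadd (phi 0) (vscal t (phi1 0))) (Wy y t).
Definition Phi1 y t := if Rle_dec t 0 then phi1 t else vadd (phi1 0) (Vy y t).

Lemma gy_cont y : continuous_on (Ici (-2 * tau)) y -> continuous_on (Ici 0) (gy y).
Proof.
  rewrite !cont_iff. intros Hy t Ht. unfold gy. apply cat_add. apply cont_iff; auto.
  apply cat_op; auto. apply cat_op; auto. apply cat_comp with (Ici (-2 * tau)).
  unfold Ici; intros; lra. auto.
  intros e He. exists e; split; auto. intros s _ Hs. replace (s - 2 * tau - (t - 2 * tau)) with (s - t) by ring. auto.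
  apply Hy. unfold Ici in *; lra.
Qed.

Lemma Vy_deriv y : continuous_on (Ici (-2 * tau)) y -> forall t, 0 <= t -> dat X (Ici 0) (Vy y) (gy y) t.
Proof. intros Hy t Ht. apply ftc1_Ici. apply gy_cont; auto. auto. Qed.
Lemma Vy_cont y : continuous_on (Ici (-2 * tau)) y -> continuous_on (Ici 0) (Vy y).
Proof. intros Hy. rewrite cont_iff. intros t Ht. apply dat_cont with (gy y); auto. apply Vy_deriv; auto. Qed.
Lemma Wy_deriv y : continuous_on (Ici (-2 * tau)) y -> forall t, 0 <= t -> dat X (Ici 0) (Wy y) (Vy y) t.
Proof. intros Hy t Ht. apply ftc1_Ici. apply Vy_cont; auto. auto. Qed.

Lemma phi_cont : continuous_on (Icc (-2 * tau) 0) phi.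
Proof. apply deriv_cont with phi1; auto. Qed.
Lemma phi1_cont : continuous_on (Icc (-2 * tau) 0) phi1.
Proof. apply deriv_cont with phi2; auto. Qed.

Lemma Phi_deriv y : continuous_on (Ici (-2 * tau)) y -> has_deriv_on (Ici (-2 * tau)) (Phi y) (Phi1 y).
Proof.
  intros Hy. rewrite deriv_iff. intros t Ht. unfold Ici in Ht.
  apply dat_glue with 0; try lra.
  - intros Ht0. rewrite deriv_iff in Hp. apply dat_ext with phi phi1. unfold Icc; lra.
    exists 1; split. lra. intros s Hs _. unfold Phi, Icc in *. destruct Rle_dec; auto; lra.
    unfold Phi1. destruct Rle_dec; auto; lra. apply Hp. unfold Icc; lra.
  - intros Ht0. apply dat_ext with (fun s => vadd (vadd (phi 0) (vscal s (phi1 0))) (Wy y s))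
       (fun s => vadd (vadd vzero (phi1 0)) (Vy y s)). unfold Ici; lra.
    exists 1; split. lra. intros s Hs _. unfold Phi, Ici in *. destruct Rle_dec; auto.
    replace s with 0 by lra. unfold Wy. rewrite Rint_0, vscal_0l. unfold vsub; vring.
    unfold Phi1. destruct Rle_dec. replace t with 0 by lra. unfold Vy. rewrite Rint_0. vring. vring.
    apply dat_add. apply dat_add. apply dat_const. apply dat_lin. apply Wy_deriv; auto.
Qed.
Lemma Phi1_cont y : continuous_on (Ici (-2 * tau)) y -> continuous_on (Ici (-2 * tau)) (Phi1 y).
Proof.
  intros Hy. rewrite cont_iff. intros t Ht. unfold Ici in Ht.
  apply cat_glue with 0; try lra.
  - intros Ht0. apply cat_ext with phi1. unfold Icc; lra.
    exists 1; split. lra. intros s Hs _. unfold Phi1, Icc in *. destruct Rle_dec; auto; lra.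
    pose proof phi1_cont as P1; rewrite cont_iff in P1; apply P1. unfold Icc; lra.
  - intros Ht0. apply cat_ext with (fun s => vadd (phi1 0) (Vy y s)). unfold Ici; lra.
    exists 1; split. lra. intros s Hs _. unfold Phi1, Ici in *. destruct Rle_dec; auto.
    replace s with 0 by lra. unfold Vy. rewrite Rint_0. vring.
    apply cat_add. apply cat_const. pose proof (Vy_cont y Hy) as V; rewrite cont_iff in V; apply V; unfold Ici; lra.
Qed.
Lemma Phi1_deriv_L y : has_deriv_on (Icc (-2 * tau) 0) (Phi1 y) phi2.
Proof.
  rewrite deriv_iff in *. intros t Ht. apply dat_ext with phi1 phi2; auto.
  exists 1; split. lra. intros s Hs _. unfold Phi1, Icc in *. destruct Rle_dec; auto; lra.
Qed.
Lemma Phi1_deriv_R y : continuous_on (Ici (-2 * tau)) y -> has_deriv_on (Ici 0) (Phi1 y) (gy y).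
Proof.
  intros Hy. rewrite deriv_iff. intros t Ht. apply dat_ext with (fun s => vadd (phi1 0) (Vy y s)) (fun s => vadd vzero (gy y s)); auto.
  exists 1; split. lra. intros s Hs _. unfold Phi1, Ici in *. destruct Rle_dec; auto.
  replace s with 0 by lra. unfold Vy. rewrite Rint_0. vring. vring.
  apply dat_add. apply dat_const. apply Vy_deriv; auto.
Qed.
Lemma Phi_init y : forall s, s <= 0 -> Phi y s = phi s.
Proof. intros s Hs. unfold Phi. destruct Rle_dec; auto; lra. Qed.
End Exist.

End M_H.
Import M_H.

Module M_H2.

Section Exist2.
Variable X : Banach.
Variable tau : R.
Hypothesis Htau : 0 < tau.
Variable Om : X -> X.
Hypothesis HOm : bounded_linear Om.
Variables phi phi1 phi2 f : R -> X.
Hypothesis Hp : has_deriv_on (Icc (-2 * tau) 0) phi phi1.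
Hypothesis Hp1 : has_deriv_on (Icc (-2 * tau) 0) phi1 phi2.
Hypothesis Hp2 : continuous_on (Icc (-2 * tau) 0) phi2.
Hypothesis Hf : continuous_on (Ici 0) f.

Notation Phi := (Phi X tau Om phi phi1 f).
Notation Phi1 := (Phi1 X tau Om phi1 f).
Notation gy := (gy X tau Om f).

Lemma Phi_agree y z c : (forall s, -2 * tau <= s <= c -> y s = z s) ->
  forall s, -2 * tau <= s <= c + 2 * tau -> Phi y s = Phi z s /\ Phi1 y s = Phi1 z s /\ (0 <= s -> gy y s = gy z s).
Proof.
  intros E s Hs.
  assert (G : forall u, 0 <= u <= c + 2 * tau -> gy y u = gy z u).
  { intros u Hu. unfold M_H.gy. rewrite E; auto. lra. }
  assert (V : forall u, 0 <= u <= c + 2 * tau -> Vy X tau Om f y u = Vy X tau Om f z u).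
  { intros u Hu. unfold Vy. apply Rint_ext. lra. intros; apply G; lra. }
  split; [|split].
  - unfold M_H.Phi. destruct Rle_dec; auto. f_equal. unfold Wy. apply Rint_ext. lra. intros; apply V; lra.
  - unfold M_H.Phi1. destruct Rle_dec; auto. f_equal. apply V; lra.
  - intros; apply G; lra.
Qed.

Definition y0 t := if Rle_dec t 0 then phi t else phi 0.
Fixpoint ys n := match n with O => y0 | S m => Phi (ys m) end.

Lemma ys_cont n : continuous_on (Ici (-2 * tau)) (ys n).
Proof.
  induction n; simpl.
  - rewrite cont_iff. intros t Ht. unfold Ici in Ht. apply cat_glue with 0; try lra.
    + intros Ht0. apply cat_ext with phi. unfold Icc; lra.
      exists 1; split. lra. intros s Hs _. unfold y0, Icc in *. destruct Rle_dec; auto; lra.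
      pose proof (phi_cont X tau phi phi1 Hp) as P. rewrite cont_iff in P. apply P. unfold Icc; lra.
    + intros Ht0. apply cat_ext with (fun _ => phi 0). unfold Ici; lra.
      exists 1; split. lra. intros s Hs _. unfold y0, Ici in *. destruct Rle_dec; auto. replace s with 0 by lra. auto.
      apply cat_const.
  - apply deriv_cont with (Phi1 (ys n)). apply (Phi_deriv X tau Htau Om HOm phi phi1 f Hp Hf); auto.
Qed.

Lemma yagree n : forall s, -2 * tau <= s <= 2 * tau * INR n -> ys (S n) s = ys n s.
Proof.
  induction n; intros s Hs.
  - simpl in *. rewrite Phi_init by lra. unfold y0. destruct Rle_dec; auto; lra.
  - change (ys (S (S n)) s) with (Phi (ys (S n)) s). change (ys (S n) s) with (Phi (ys n) s).
    apply (Phi_agree (ys (S n)) (ys n) (2 * tau * INR n)); auto. rewrite S_INR in Hs. lra.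
Qed.
Lemma yagree_le n m : (n <= m)%nat -> forall s, -2 * tau <= s <= 2 * tau * INR n -> ys m s = ys n s.
Proof.
  intros Hnm s Hs. induction m. replace n with O by lia; auto.
  destruct (Nat.eq_dec n (S m)). subst; auto.
  rewrite yagree. apply IHm; lia. split. lra. assert (INR n <= INR m) by (apply le_INR; lia). nra.
Qed.
Lemma yeq n m s : -2 * tau <= s -> s <= 2 * tau * INR n -> s <= 2 * tau * INR m -> ys n s = ys m s.
Proof.
  intros H1 H2 H3. destruct (Nat.le_ge_cases n m).
  symmetry; apply yagree_le; auto. apply yagree_le; auto.
Qed.

Definition Nt t := Z.to_nat (up (t / (2 * tau))).
Lemma Nt_spec t : -2 * tau <= t -> t < 2 * tau * INR (Nt t).
Proof.
  intros H. destruct (up_facts t (2 * tau)) as [_ [H1 _]]; try lra. unfold Nt. lra.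
Qed.

Lemma loc_agree k s : -2 * tau <= s -> s <= 2 * tau * INR k ->
  Phi (ys (Nt s)) s = Phi (ys k) s /\ Phi1 (ys (Nt s)) s = Phi1 (ys k) s /\ (0 <= s -> gy (ys (Nt s)) s = gy (ys k) s).
Proof.
  intros H1 H2. pose proof (Nt_spec s H1).
  destruct (Nat.le_ge_cases (Nt s) k).
  - apply (Phi_agree (ys (Nt s)) (ys k) (2 * tau * INR (Nt s))). intros; apply yeq; try lra.
    assert (INR (Nt s) <= INR k) by (apply le_INR; lia). nra. lra.
  - apply (Phi_agree (ys (Nt s)) (ys k) (2 * tau * INR k)). intros; apply yeq; try lra.
    assert (INR k <= INR (Nt s)) by (apply le_INR; lia). nra. lra.
Qed.

Definition xsol t := Phi (ys (Nt t)) t.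
Definition xs' t := Phi1 (ys (Nt t)) t.
Definition xsR t := gy (ys (Nt t)) t.

Lemma exists_sol : classical_solution Om tau phi f xsol.
Proof.
  exists xs', phi2, xsR.
  assert (Loc : forall t, -2 * tau <= t -> exists r, 0 < r /\ forall s, -2 * tau <= s -> Rabs (s - t) < r ->
     xsol s = Phi (ys (Nt t)) s /\ xs' s = Phi1 (ys (Nt t)) s /\ (0 <= s -> xsR s = gy (ys (Nt t)) s)).
  { intros t Ht. pose proof (Nt_spec t Ht). exists (2 * tau * INR (Nt t) - t). split. lra.
    intros s Hs Hst. apply Rabs_def2 in Hst. unfold xsol, xs', xsR. apply loc_agree. lra. lra. }
  split; [|split; [|split; [|split; [|split; [|split; [|split]]]]]].
  - rewrite deriv_iff. intros t Ht. unfold Ici in Ht. destruct (Loc t Ht) as [r [Hr L]].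
    apply dat_ext with (Phi (ys (Nt t))) (Phi1 (ys (Nt t))); auto.
    exists r; split; auto. intros s Hs Hst. symmetry; apply L; auto.
    pose proof (Phi_deriv X tau Htau Om HOm phi phi1 f Hp Hf (ys (Nt t)) (ys_cont _)) as P. rewrite deriv_iff in P. apply P. auto.
  - rewrite cont_iff. intros t Ht. unfold Ici in Ht. destruct (Loc t Ht) as [r [Hr L]].
    apply cat_ext with (Phi1 (ys (Nt t))); auto.
    exists r; split; auto. intros s Hs Hst. symmetry; apply L; auto.
    pose proof (Phi1_cont X tau Htau Om HOm phi1 phi2 f Hp1 Hf (ys (Nt t)) (ys_cont _)) as P. rewrite cont_iff in P. apply P. auto.
  - rewrite deriv_iff. rewrite deriv_iff in Hp1. intros t Ht. apply dat_ext with phi1 phi2; auto.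
    exists 1; split. lra. intros s Hs _. unfold xs', M_H.Phi1, Icc in *. destruct Rle_dec; auto; lra.
  - auto.
  - rewrite deriv_iff. intros t Ht. unfold Ici in Ht. destruct (Loc t ltac:(lra)) as [r [Hr L]].
    apply dat_ext with (Phi1 (ys (Nt t))) (gy (ys (Nt t))); auto.
    exists r; split; auto. intros s Hs Hst. unfold Ici in Hs. symmetry; apply L; auto; lra.
    pose proof (Phi1_deriv_R X tau Om HOm phi1 f Hf (ys (Nt t)) (ys_cont _)) as P. rewrite deriv_iff in P. apply P. auto.
  - rewrite cont_iff. intros t Ht. unfold Ici in Ht. destruct (Loc t ltac:(lra)) as [r [Hr L]].
    apply cat_ext with (gy (ys (Nt t))); auto.
    exists r; split; auto. intros s Hs Hst. unfold Ici in Hs. symmetry; apply L; auto; lra.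
    pose proof (gy_cont X tau Om HOm f Hf (ys (Nt t)) (ys_cont _)) as P. rewrite cont_iff in P. apply P. auto.
  - intros t Ht. unfold xsR, M_H.gy, xsol.
    change (Phi (ys (Nt (t - 2 * tau))) (t - 2 * tau)) with (ys (S (Nt (t - 2 * tau))) (t - 2 * tau)).
    rewrite (yeq (Nt t) (S (Nt (t - 2 * tau))) (t - 2 * tau)). unfold vsub; vring.
    lra. pose proof (Nt_spec t ltac:(lra)). lra.
    pose proof (Nt_spec (t - 2 * tau) ltac:(lra)). rewrite S_INR. lra.
  - intros t Ht. unfold xsol. apply Phi_init. lra.
Qed.
End Exist2.

End M_H2.
Import M_H2.


Lemma formula_eq (X : Banach) (Om Ominv : X -> X) (tau : R) (phi phi1 phi2 f : R -> X) :
  bounded_linear Om -> bounded_linear Ominv -> (forall v, Ominv (Om v) = v) -> 0 < tau ->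
  has_deriv_on (Icc (-2 * tau) 0) phi phi1 -> has_deriv_on (Icc (-2 * tau) 0) phi1 phi2 ->
  continuous_on (Icc (-2 * tau) 0) phi2 -> continuous_on (Ici 0) f ->
  forall x, classical_solution Om tau phi f x -> forall t, -2 * tau <= t ->
  x t = vadd (vadd (vadd (x1 tau Om (t + tau) (phi (-2 * tau))) (x2 tau Om Ominv (t + 2 * tau) (phi1 (-2 * tau))))
                   (Rint X (fun s => x2 tau Om Ominv (t - s) (phi2 s)) (-2 * tau) 0))
             (if Rlt_dec t 0 then vzero else Rint X (fun s => x2 tau Om Ominv (t - s) (f s)) 0 t).
Proof.
  intros HOm HOmi Hinv Htau Hp Hp1 Hp2 Hf x Hx t Ht. destruct (Rlt_dec t 0) as [Hl|Hl].
  - pose proof (formula_neg X tau Htau Om Ominv HOm HOmi Hinv phi phi1 phi2 f Hp Hp1 Hp2 Hf x t Hx Ht Hl) as E.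
    rewrite (Rint_eq X _ (-2 * tau) 0 _ ltac:(lra) E). rewrite P_start. unfold vsub; vring.
  - pose proof (formula_pos X tau Htau Om Ominv HOm HOmi Hinv phi phi1 phi2 f Hp Hp1 Hp2 Hf x t Hx ltac:(lra)) as E.
    rewrite <- E. rewrite P_start. unfold vsub; vring.
Qed.

Theorem mainTheorem7 (X : Banach) (Om Ominv : X -> X) (tau : R)
    (phi phi1 phi2 f : R -> X) :
  bounded_linear Om -> bounded_linear Ominv ->
  (forall v, Om (Ominv v) = v) -> (forall v, Ominv (Om v) = v) ->
  0 < tau ->
  has_deriv_on (Icc (-2 * tau) 0) phi phi1 ->
  has_deriv_on (Icc (-2 * tau) 0) phi1 phi2 ->
  continuous_on (Icc (-2 * tau) 0) phi2 ->
  continuous_on (Ici 0) f ->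
  (exists x, classical_solution Om tau phi f x) /\
  (forall x y, classical_solution Om tau phi f x -> classical_solution Om tau phi f y ->
     forall t, -2 * tau <= t -> x t = y t) /\
  (forall x, classical_solution Om tau phi f x ->
     forall t, -2 * tau <= t ->
       exists I1 I2 : X,
         is_RInt (fun s => x2 tau Om Ominv (t - s) (phi2 s)) (-2 * tau) 0 I1 /\
         (0 <= t -> is_RInt (fun s => x2 tau Om Ominv (t - s) (f s)) 0 t I2) /\
         x t = vadd (vadd (vadd (x1 tau Om (t + tau) (phi (-2 * tau)))
                                (x2 tau Om Ominv (t + 2 * tau) (phi1 (-2 * tau))))
                          I1)
                    (if Rlt_dec t 0 then vzero else I2)).
Proof.
  intros HOm HOmi _ Hinv Htau Hp Hp1 Hp2 Hf. split; [|split].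
  - exists (xsol X tau Om phi phi1 f). apply (exists_sol X tau Htau Om HOm phi phi1 phi2 f Hp Hp1 Hp2 Hf).
  - intros x y Hx Hy t Ht.
    rewrite (formula_eq X Om Ominv tau phi phi1 phi2 f HOm HOmi Hinv Htau Hp Hp1 Hp2 Hf x Hx t Ht).
    rewrite (formula_eq X Om Ominv tau phi phi1 phi2 f HOm HOmi Hinv Htau Hp Hp1 Hp2 Hf y Hy t Ht). auto.
  - intros x Hx t Ht.
    exists (Rint X (fun s => x2 tau Om Ominv (t - s) (phi2 s)) (-2 * tau) 0).
    exists (Rint X (fun s => x2 tau Om Ominv (t - s) (f s)) 0 t).
    split; [|split].
    + apply Rint_cont. lra. apply cont_K; auto. lra.
    + intros Ht0. apply Rint_cont. auto. apply cont_K; auto. apply cont_sub with (Ici 0); auto. unfold Icc, Ici; intros; lra.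
    + apply formula_eq; auto.
Qed.
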